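(* Let $h\in(0,2\pi)$, $\alpha>0$ and $T>0$ be constants. Let $k\colon[0,2\pi]\to(0,+\infty)$ be a twice continuously differentiable positive function with $k(0)=k(2\pi)$, $k'(0)=k'(2\pi)$, and let $\varphi\colon[-h,2\pi]\to[0,+\infty)$ be a twice continuously differentiable nonnegative function with $\int_0^{2\pi}\varphi(x)\,\mathrm{d}x=1$ and $\varphi(x)=\varphi(x+2\pi)$ for all $x\in[-h,0]$. Put $$\bar k=\max_{0\le x\le 2\pi}\max\{|k(x)|,|k'(x)|,|k''(x)|\}.$$ Define the sequence $(u^m)_{m\ge 0}$ of functions on $[0,2\pi]\times[0,T]$ by $u^0(x,t)=\varphi(x)$ and, for $m\ge0$, $u^{m+1}$ is the solution $v$ of the linear problem $$\frac{\partial v}{\partial t}-\alpha\frac{\partial^2 v}{\partial x^2}=\mathcal F u^m(x,t),\quad v(x,0)=\varphi(x),\quad v(0,t)=v(2\pi,t),\quad \frac{\partial v}{\partial x}(0,t)=\frac{\partial v}{\partial x}(2\pi,t),$$ for $0\le x\le 2\pi$, $0\le t\le T$, where $$\mathcal F u^m(x,t)=u^m(x,t)\bigl(k(x)\,u^m(x-h,t)-f[u^m(\cdot,t)]\bigr),\qquad f[u^m(\cdot,t)]=\int_0^{2\pi}k(x)\,u^m(x,t)\,u^m(x-h,t)\,\mathrm{d}x,$$ with the convention $u^m(x-h,t)=u^m(x-h+2\pi,t)$ whenever $x-h<0$. Then, if $\bar k$ is sufficiently small, the sequence of norms $\|u^m\|_{\mathbf C^{2,1}([0,2\pi]\times[0,T])}$,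 $m=0,1,2,\dots$, is uniformly bounded.
   Context: $\mathbf C^{2,1}([0,2\pi]\times[0,T])$ denotes the Banach space of continuous functions $w(x,t)$ on $[0,2\pi]\times[0,T]$ such that $\partial w/\partial x$, $\partial^2 w/\partial x^2$, $\partial w/\partial t$ are continuous on $[0,2\pi]\times[0,T]$ (continuity up to the boundary meaning the limits from the interior exist and are taken as boundary values), with norm $$\|w\|_{\mathbf C^{2,1}}=\max_{0\le x\le2\pi,\,0\le t\le T}\Bigl\{|w|+\Bigl|\tfrac{\partial w}{\partial x}\Bigr|+\Bigl|\tfrac{\partial^2 w}{\partial x^2}\Bigr|+\Bigl|\tfrac{\partial w}{\partial t}\Bigr|\Bigr\}.$$ $\mathbf C^{2}([0,2\pi])$ is defined analogously without $t$. ''Sufficiently small'' means: there is a threshold, depending on the remaining data ($\alpha$, $T$, $\varphi$), such that the conclusion holds whenever $\bar k$ is below it. *)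

(* Defs.v *)
From Stdlib Require Import Reals Lra.
From Coquelicot Require Import Coquelicot.
Open Scope R_scope.

Definition cont_on (a b : R) (f : R -> R) : Prop :=
  forall x, a <= x <= b -> forall eps, 0 < eps -> exists d, 0 < d /\
    forall y, a <= y <= b -> Rabs (y - x) < d -> Rabs (f y - f x) < eps.

(* f is in C^2([a,b]): f1, f2 are its first and second derivatives in the
   interior (a,b), and f, f1, f2 are continuous on the closed interval
   (so f1, f2 on [a,b] are the continuous extensions, i.e. the boundary
   values are the limits from the interior). *)
Definition C2_on (a b : R) (f f1 f2 : R -> R) : Prop :=
  (forall x, a < x < b -> is_derive f x (f1 x) /\ is_derive f1 x (f2 x)) /\
  cont_on a b f /\ cont_on a b f1 /\ cont_on a b f2.

Definition cont_rect (T : R) (w : R -> R -> R) : Prop :=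
  forall x t, 0 <= x <= 2 * PI -> 0 <= t <= T ->
  forall eps, 0 < eps -> exists d, 0 < d /\
    forall y s, 0 <= y <= 2 * PI -> 0 <= s <= T ->
      Rabs (y - x) < d -> Rabs (s - t) < d -> Rabs (w y s - w x t) < eps.

Definition C21 (T : R) (w wx wxx wt : R -> R -> R) : Prop :=
  (forall x t, 0 < x < 2 * PI -> 0 < t < T ->
     is_derive (fun y => w y t) x (wx x t) /\
     is_derive (fun y => wx y t) x (wxx x t) /\
     is_derive (fun s => w x s) t (wt x t)) /\
  cont_rect T w /\ cont_rect T wx /\ cont_rect T wxx /\ cont_rect T wt.

(* Pointwise quantity whose max over the rectangle is the C^{2,1} norm. *)
Definition C21_pt (w wx wxx wt : R -> R -> R) (x t : R) : R :=
  Rabs (w x t) + Rabs (wx x t) + Rabs (wxx x t) + Rabs (wt x t).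

Definition shift (h : R) (u : R -> R -> R) (x t : R) : R :=
  if Rlt_dec (x - h) 0 then u (x - h + 2 * PI) t else u (x - h) t.

Definition fnl (h : R) (k : R -> R) (u : R -> R -> R) (t : R) : R :=
  RInt (fun y => k y * u y t * shift h u y t) 0 (2 * PI).

Definition Fop (h : R) (k : R -> R) (u : R -> R -> R) (x t : R) : R :=
  u x t * (k x * shift h u x t - fnl h k u t).

Definition is_lin_solution (alpha T : R) (phi : R -> R) (g : R -> R -> R)
    (v : R -> R -> R) : Prop :=
  exists vx vxx vt : R -> R -> R,
    C21 T v vx vxx vt /\
    (forall x t, 0 <= x <= 2 * PI -> 0 <= t <= T ->
       vt x t - alpha * vxx x t = g x t) /\
    (forall x, 0 <= x <= 2 * PI -> v x 0 = phi x) /\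
    (forall t, 0 <= t <= T -> v 0 t = v (2 * PI) t /\ vx 0 t = vx (2 * PI) t).

(* Main.v *)
Require Import Defs.
From Stdlib Require Import Reals Lra Lia Psatz ZArith Classical ClassicalEpsilon.
From Coquelicot Require Import Coquelicot.
Open Scope R_scope.

Lemma locally_R (x : R) (P : R -> Prop) :
  (exists d, 0 < d /\ forall y, Rabs (y - x) < d -> P y) -> locally x P.
Proof.
  intros [d [Hd H]]. exists (mkposreal d Hd). intros y Hy. apply H. exact Hy.
Qed.

Lemma locally_R_inv (x : R) (P : R -> Prop) :
  locally x P -> exists d, 0 < d /\ forall y, Rabs (y - x) < d -> P y.
Proof.
  intros [d H]. exists d. split. apply cond_pos. intros y Hy. apply H. exact Hy.
Qed.

Definition clamp (a b x : R) := Rmax a (Rmin b x).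

Lemma clamp_in a b x : a <= b -> a <= clamp a b x <= b.
Proof. intros. unfold clamp, Rmax, Rmin. repeat destruct Rle_dec; lra. Qed.

Lemma clamp_id a b x : a <= x <= b -> clamp a b x = x.
Proof. intros. unfold clamp, Rmax, Rmin. repeat destruct Rle_dec; lra. Qed.

Lemma clamp_lip a b x y : a <= b -> Rabs (clamp a b x - clamp a b y) <= Rabs (x - y).
Proof. intros. unfold clamp, Rmax, Rmin. repeat destruct Rle_dec; unfold Rabs; repeat destruct Rcase_abs; lra. Qed.

Lemma cont_clamp a b f : a <= b -> cont_on a b f ->
  forall x, continuity_pt (fun y => f (clamp a b y)) x.
Proof.
  intros Hab Hc x. apply continuity_pt_locally. intros eps.
  apply locally_R.
  destruct (Hc (clamp a b x) (clamp_in a b x Hab) eps (cond_pos eps)) as [d [Hd H]].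
  exists d. split; auto. intros y Hy. apply H. apply clamp_in; auto.
  eapply Rle_lt_trans. apply clamp_lip; auto. auto.
Qed.

Lemma MVT_rel a b f df : a < b -> cont_on a b f ->
  (forall x, a < x < b -> is_derive f x (df x)) ->
  exists c, a <= c <= b /\ f b - f a = df c * (b - a).
Proof.
  intros Hab Hc Hd.
  destruct (MVT_gen (fun y => f (clamp a b y)) a b df) as [c [Hc1 Hc2]].
  - intros x Hx. rewrite Rmin_left in Hx by lra. rewrite Rmax_right in Hx by lra.
    apply is_derive_ext_loc with f; [|apply Hd; lra].
    apply locally_R. exists (Rmin (x - a) (b - x)). split.
    apply Rmin_case; lra. intros y Hy. rewrite clamp_id; auto.
    revert Hy. apply Rmin_case_strong; intros; unfold Rabs in *; destruct Rcase_abs; lra.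
  - intros. apply cont_clamp; auto; lra.
  - exists c. rewrite Rmin_left in Hc1 by lra. rewrite Rmax_right in Hc1 by lra.
    split; auto. rewrite !clamp_id in Hc2 by lra. auto.
Qed.

Lemma EVT1_rel a b f : a <= b -> cont_on a b f ->
  exists c, a <= c <= b /\ forall x, a <= x <= b -> f x <= f c.
Proof.
  intros Hab Hc.
  destruct (continuity_ab_maj (fun y => f (clamp a b y)) a b Hab) as [c [H1 H2]].
  intros; apply cont_clamp; auto.
  exists c. split; auto. rewrite clamp_id in H1 by auto. intros x Hx.
  specialize (H1 x Hx). rewrite clamp_id in H1 by auto. auto.
Qed.

Lemma bound_on a b f : a <= b -> cont_on a b f ->
  exists M, forall x, a <= x <= b -> Rabs (f x) <= M.
Proof.
  intros Hab Hc.
  assert (Hc' : cont_on a b (fun x => Rabs (f x))).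
  { intros x Hx eps He. destruct (Hc x Hx eps He) as [d [Hd H]]. exists d; split; auto.
    intros y Hy Hyx. eapply Rle_lt_trans. apply Rabs_triang_inv2. apply H; auto. }
  destruct (EVT1_rel a b _ Hab Hc') as [c [_ H]]. exists (Rabs (f c)). auto.
Qed.

Lemma PI_gt1 : 1 < PI.
Proof. pose proof PI2_1. lra. Qed.
Lemma PI_le4 : PI <= 4.
Proof. exact PI_4. Qed.

Definition red (x : R) := x - 2 * PI * IZR (Int_part (x / (2 * PI))).

Lemma red_repr x : let n := Int_part (x / (2 * PI)) in
  2 * PI * IZR n <= x < 2 * PI * (IZR n + 1) /\ red x = x - 2 * PI * IZR n.
Proof.
  intros n. pose proof PI_gt1. destruct (base_Int_part (x / (2 * PI))) as [H1 H2].
  fold n in H1, H2. split; [|reflexivity].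
  assert (E : x = 2 * PI * (x / (2 * PI))) by (field; lra).
  split.
  - rewrite E. apply Rmult_le_compat_l; lra.
  - rewrite E. apply Rmult_lt_compat_l; lra.
Qed.

Lemma red_bounds x : 0 <= red x < 2 * PI.
Proof. destruct (red_repr x) as [[H1 H2] H3]. rewrite H3. lra. Qed.

Lemma red_piece (n : Z) y : 2 * PI * IZR n <= y <= 2 * PI * (IZR n + 1) ->
  red y = y - 2 * PI * IZR n \/ (y = 2 * PI * (IZR n + 1) /\ red y = 0).
Proof.
  intros Hy. pose proof PI_gt1.
  destruct (red_repr y) as [[H1 H2] H3]. set (m := Int_part (y / (2 * PI))) in *.
  assert (Hnm1 : (IZR n < IZR m + 1)).
  { apply Rmult_lt_reg_l with (2 * PI); lra. }
  assert (Hnm2 : (IZR m <= IZR n + 1)).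
  { apply Rmult_le_reg_l with (2 * PI); lra. }
  rewrite <- plus_IZR in Hnm1, Hnm2.
  apply lt_IZR in Hnm1. apply le_IZR in Hnm2.
  assert (m = n \/ m = (n + 1)%Z) as [E|E] by lia.
  - left. rewrite H3, E. auto.
  - right. rewrite E, plus_IZR in H1. simpl in H1. split. lra.
    rewrite H3, E, plus_IZR. simpl. lra.
Qed.

Lemma red_id y : 0 <= y < 2 * PI -> red y = y.
Proof.
  intros Hy. destruct (red_piece 0 y) as [H|[H1 H2]]; simpl; try lra.

Qed.

Lemma red_addZ (n : Z) y : red (y + 2 * PI * IZR n) = red y.
Proof.
  destruct (red_repr y) as [[H1 H2] H3]. set (m := Int_part (y / (2 * PI))) in *.
  destruct (red_piece (m + n) (y + 2 * PI * IZR n)) as [H|[H4 H5]];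
  rewrite plus_IZR in *; try lra.
Qed.

Lemma red_add2PI y : red (y + 2 * PI) = red y.
Proof. rewrite <- (red_addZ 1 y). f_equal. simpl. ring. Qed.

Lemma red_sub2PI y : red (y - 2 * PI) = red y.
Proof. rewrite <- (red_addZ (-1) y). f_equal. simpl. ring. Qed.

Lemma per_piece (f : R -> R) : f 0 = f (2 * PI) ->
  forall (n : Z) y, 2 * PI * IZR n <= y <= 2 * PI * (IZR n + 1) ->
  f (red y) = f (y - 2 * PI * IZR n).
Proof.
  intros Hf n y Hy. destruct (red_piece n y Hy) as [H|[H1 H2]].
  rewrite H; auto. rewrite H2, H1, Hf. f_equal. ring.
Qed.

Lemma cont_on_sub a b c d f : a <= c -> d <= b -> cont_on a b f -> cont_on c d f.
Proof.
  intros H1 H2 Hc x Hx eps He. destruct (Hc x ltac:(lra) eps He) as [dd [Hd H]].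
  exists dd; split; auto. intros y Hy. apply H. lra.
Qed.

Lemma RD a b f f1 : cont_on a b f -> cont_on a b f1 ->
  (forall x, a < x < b -> is_derive f x (f1 x)) ->
  forall y, a <= y <= b -> forall eps, 0 < eps -> exists d, 0 < d /\
   forall z, a <= z <= b -> z <> y -> Rabs (z - y) < d ->
     Rabs ((f z - f y) / (z - y) - f1 y) <= eps.
Proof.
  intros Hf Hf1 Hd y Hy eps He.
  destruct (Hf1 y Hy eps He) as [d [Hd0 H]].
  exists d. split; auto. intros z Hz Hzy Hzd.
  destruct (Rlt_or_le y z) as [Hlt|Hle].
  - destruct (MVT_rel y z f f1 Hlt) as [c [Hc Heq]].
    apply cont_on_sub with a b; try lra; auto.
    intros; apply Hd; lra.
    rewrite Heq. replace (f1 c * (z - y) / (z - y)) with (f1 c) by (field; lra).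
    left. apply H. lra. unfold Rabs in *; repeat destruct Rcase_abs; lra.
  - assert (z < y) by lra.
    destruct (MVT_rel z y f f1 H0) as [c [Hc Heq]].
    apply cont_on_sub with a b; try lra; auto.
    intros; apply Hd; lra.
    replace ((f z - f y) / (z - y)) with (f1 c).
    left. apply H. lra. unfold Rabs in *; repeat destruct Rcase_abs; lra.
    replace (f z - f y) with (- (f y - f z)) by ring. rewrite Heq. field. lra.
Qed.

Lemma GD f f1 : cont_on 0 (2 * PI) f -> cont_on 0 (2 * PI) f1 ->
  (forall x, 0 < x < 2 * PI -> is_derive f x (f1 x)) ->
  f 0 = f (2 * PI) -> f1 0 = f1 (2 * PI) ->
  forall x, is_derive (fun y => f (red y)) x (f1 (red x)).
Proof.
  intros Hf Hf1 Hd P0 P1 x. apply is_derive_Reals. intros eps He.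
  pose proof PI_gt1.
  destruct (red_repr x) as [[Hx1 Hx2] Hrx]. set (n := Int_part (x / (2 * PI))) in *.
  assert (Hy0 : 0 <= red x < 2 * PI) by (rewrite Hrx; lra).
  destruct (RD _ _ f f1 Hf Hf1 Hd (red x) ltac:(lra) (eps/2) ltac:(lra)) as [d1 [Hd1 H1]].
  assert (Hright : forall h, 0 <= x + h - 2 * PI * IZR n <= 2 * PI -> f (red (x + h)) = f (red x + h)).
  { intros h Hh. rewrite (per_piece f P0 n). f_equal. rewrite Hrx. ring.
    lra. }
  destruct (Rlt_or_le 0 (red x)) as [Hpos|Hz].
  - assert (Hdp : 0 < Rmin d1 (Rmin (red x) (2 * PI - red x))).
    { repeat apply Rmin_pos; lra. }
    exists (mkposreal _ Hdp). simpl. intros h Hh0 Hh.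
    assert (Hh1 : Rabs h < d1) by (eapply Rlt_le_trans; [apply Hh|apply Rmin_l]).
    assert (Hh2 : Rabs h < red x) by (eapply Rlt_le_trans; [apply Hh|]; eapply Rle_trans; [apply Rmin_r|apply Rmin_l]).
    assert (Hh3 : Rabs h < 2 * PI - red x) by (eapply Rlt_le_trans; [apply Hh|]; eapply Rle_trans; [apply Rmin_r|apply Rmin_r]).
    assert (Hab : - red x < h < 2 * PI - red x) by (unfold Rabs in *; destruct Rcase_abs; lra).
    rewrite Hright by lra.
    specialize (H1 (red x + h) ltac:(lra) ltac:(lra)).
    replace (red x + h - red x) with h in H1 by ring.
    eapply Rle_lt_trans. apply H1. replace (red x + h - red x) with h by ring. auto. lra.
  - assert (Ez : red x = 0) by lra.
    destruct (RD _ _ f f1 Hf Hf1 Hd (2 * PI) ltac:(lra) (eps/2) ltac:(lra)) as [d2 [Hd2 H2]].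
    assert (Hdp : 0 < Rmin d1 (Rmin d2 (2 * PI))).
    { repeat apply Rmin_pos; lra. }
    exists (mkposreal _ Hdp). simpl. intros h Hh0 Hh.
    assert (Hh1 : Rabs h < d1) by (eapply Rlt_le_trans; [apply Hh|apply Rmin_l]).
    assert (Hh2 : Rabs h < d2) by (eapply Rlt_le_trans; [apply Hh|]; eapply Rle_trans; [apply Rmin_r|apply Rmin_l]).
    assert (Hh3 : Rabs h < 2 * PI) by (eapply Rlt_le_trans; [apply Hh|]; eapply Rle_trans; [apply Rmin_r|apply Rmin_r]).
    assert (HN : x = 2 * PI * IZR n) by lra.
    destruct (Rlt_or_le 0 h) as [hp|hn].
    + rewrite Hright by (unfold Rabs in *; destruct Rcase_abs; lra).
      specialize (H1 (red x + h) ltac:(unfold Rabs in *; destruct Rcase_abs; lra) ltac:(lra)).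
      replace (red x + h - red x) with h in H1 by ring.
      eapply Rle_lt_trans. apply H1. replace (red x + h - red x) with h by ring. auto. lra.
    + assert (hneg : h < 0) by lra.
      rewrite (per_piece f P0 (n - 1) (x + h)).
      2:{ rewrite minus_IZR. simpl. unfold Rabs in *; destruct Rcase_abs; lra. }
      rewrite Ez, P0, P1. rewrite minus_IZR. simpl.
      replace (x + h - 2 * PI * (IZR n - 1)) with (2 * PI + h) by (lra).
      specialize (H2 (2 * PI + h) ltac:(unfold Rabs in *; destruct Rcase_abs; lra) ltac:(lra)).
      replace (2 * PI + h - 2 * PI) with h in H2 by ring.
      rewrite Ez, P0, P1 in *.
      eapply Rle_lt_trans. apply H2. replace (2 * PI + h - 2 * PI) with h by ring. auto. lra.
Qed.

Lemma PL g g1 L : cont_on 0 (2 * PI) g ->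
  (forall x, 0 < x < 2 * PI -> is_derive g x (g1 x)) ->
  (forall x, 0 <= x <= 2 * PI -> Rabs (g1 x) <= L) ->
  g 0 = g (2 * PI) ->
  forall x y, Rabs (x - y) <= 2 -> Rabs (g (red x) - g (red y)) <= L * Rabs (x - y).
Proof.
  intros Hg Hd Hb P0. pose proof PI_gt1.
  assert (L0 : forall u v, 0 <= u <= 2 * PI -> 0 <= v <= 2 * PI -> Rabs (g u - g v) <= L * Rabs (u - v)).
  { intros u v Hu Hv. destruct (Rtotal_order u v) as [Hlt|[Heq|Hgt]].
    - destruct (MVT_rel u v g g1 Hlt) as [c [Hc E]].
      apply cont_on_sub with 0 (2*PI); auto; lra. intros; apply Hd; lra.
      rewrite <- Rabs_Ropp, Ropp_minus_distr, E, Rabs_mult, <- (Rabs_Ropp (u - v)), Ropp_minus_distr.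
      apply Rmult_le_compat_r. apply Rabs_pos. apply Hb; lra.
    - subst. rewrite !Rminus_eq_0, Rabs_R0. lra.
    - destruct (MVT_rel v u g g1 Hgt) as [c [Hc E]].
      apply cont_on_sub with 0 (2*PI); auto; lra. intros; apply Hd; lra.
      rewrite E, Rabs_mult. apply Rmult_le_compat_r. apply Rabs_pos. apply Hb; lra. }
  assert (LP : forall (n : Z) u v, 2*PI*IZR n <= u <= 2*PI*(IZR n+1) -> 2*PI*IZR n <= v <= 2*PI*(IZR n+1) ->
     Rabs (g (red u) - g (red v)) <= L * Rabs (u - v)).
  { intros n u v Hu Hv. rewrite (per_piece g P0 n u Hu), (per_piece g P0 n v Hv).
    replace (u - v) with ((u - 2 * PI * IZR n) - (v - 2 * PI * IZR n)) by ring. apply L0; lra. }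
  assert (W : forall x y, x <= y -> y - x <= 2 -> Rabs (g (red x) - g (red y)) <= L * Rabs (x - y)).
  { intros x y Hxy H2. destruct (red_repr x) as [[Hx1 Hx2] _]. set (n := Int_part (x / (2 * PI))) in *.
    destruct (Rle_or_lt y (2 * PI * (IZR n + 1))).
    - apply (LP n); lra.
    - set (b := 2 * PI * (IZR n + 1)).
      replace (g (red x) - g (red y)) with ((g (red x) - g (red b)) + (g (red b) - g (red y))) by ring.
      eapply Rle_trans. apply Rabs_triang.
      assert (Hl : 0 <= L).
      { eapply Rle_trans. apply Rabs_pos. apply (Hb 0). lra. }
      eapply Rle_trans. apply Rplus_le_compat. apply (LP n); unfold b; lra.
      apply (LP (n + 1)%Z); rewrite plus_IZR; simpl; unfold b; lra.
      rewrite <- Rmult_plus_distr_l. apply Rmult_le_compat_l; auto.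
      unfold b; unfold Rabs; repeat destruct Rcase_abs; lra. }
  intros x y Hxy. destruct (Rle_or_lt x y).
  apply W; auto. unfold Rabs in Hxy; destruct Rcase_abs; lra.
  rewrite <- Rabs_Ropp, Ropp_minus_distr, <- (Rabs_Ropp (x - y)), Ropp_minus_distr.
  apply W. lra. unfold Rabs in Hxy; destruct Rcase_abs; lra.
Qed.

Lemma is_derive_shp (F : R -> R) x s l : is_derive F (x + s) l -> is_derive (fun s => F (x + s)) s l.
Proof.
  intros H. assert (H1 : is_derive (fun s => x + s) s 1) by (auto_derive; auto; ring).
  pose proof (is_derive_comp F (fun s => x + s) s l 1 H H1). simpl in H0.
  change (scal 1 l) with (1 * l) in H0. rewrite Rmult_1_l in H0. exact H0.
Qed.

Lemma is_derive_shm (F : R -> R) x s l : is_derive F (x - s) l -> is_derive (fun s => F (x - s)) s (- l).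
Proof.
  intros H. assert (H1 : is_derive (fun s => x - s) s (-1)) by (auto_derive; auto; ring).
  pose proof (is_derive_comp F (fun s => x - s) s l (-1) H H1). simpl in H0.
  change (scal (-1) l) with ((-1) * l) in H0. replace (-1 * l) with (- l) in H0 by ring. exact H0.
Qed.

Lemma MVT_full (f df : R -> R) : (forall x, is_derive f x (df x)) ->
  forall a b, exists c, Rmin a b <= c <= Rmax a b /\ f b - f a = df c * (b - a).
Proof.
  intros Hd a b. apply MVT_gen. intros; apply Hd.
  intros x _. apply continuity_pt_filterlim. apply (ex_derive_continuous f x).
  exists (df x). apply Hd.
Qed.

Definition S3 (L0 L1 L2 : R) (f : R -> R) : Prop :=
  (forall x, Rabs (f x) <= L0) /\
  (forall x y, Rabs (x - y) <= 1 -> Rabs (f x - f y) <= L1 * Rabs (x - y)) /\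
  (forall x d, 0 <= d <= 1 -> Rabs (f (x + d) + f (x - d) - 2 * f x) <= L2 * d ^ 2).

Lemma S3_nonneg L0 L1 L2 f : S3 L0 L1 L2 f -> 0 <= L0 /\ 0 <= L1 /\ 0 <= L2.
Proof.
  intros [H0 [H1 H2]]. split; [|split].
  - eapply Rle_trans. apply Rabs_pos. apply (H0 0).
  - specialize (H1 1 0). replace (1 - 0) with 1 in H1 by ring. rewrite Rabs_R1 in H1.
    pose proof (Rabs_pos (f 1 - f 0)). lra.
  - specialize (H2 0 1). pose proof (Rabs_pos (f (0 + 1) + f (0 - 1) - 2 * f 0)). 
    assert (1 ^ 2 = 1) by ring. rewrite H3 in H2. lra.
Qed.

Lemma S3_mono L0 L1 L2 M0 M1 M2 f : S3 L0 L1 L2 f -> L0 <= M0 -> L1 <= M1 -> L2 <= M2 -> S3 M0 M1 M2 f.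
Proof.
  intros [H0 [H1 H2]] A0 A1 A2. split; [|split].
  - intros x. eapply Rle_trans; eauto.
  - intros x y H. eapply Rle_trans. apply H1; auto. apply Rmult_le_compat_r; auto. apply Rabs_pos.
  - intros x d H. eapply Rle_trans. apply H2; auto. apply Rmult_le_compat_r; auto.
    apply pow2_ge_0.
Qed.

Lemma S3_const c C : Rabs c <= C -> S3 C 0 0 (fun _ => c).
Proof.
  intros H. split; [|split]; intros; auto.
  - rewrite Rminus_eq_0, Rabs_R0. lra.
  - replace (c + c - 2 * c) with 0 by ring. rewrite Rabs_R0. lra.
Qed.

Lemma S3_shift L0 L1 L2 f h : S3 L0 L1 L2 f -> S3 L0 L1 L2 (fun x => f (x - h)).
Proof.
  intros [H0 [H1 H2]]. split; [|split]; intros.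
  - auto.
  - replace (x - y) with ((x - h) - (y - h)) by ring. apply H1. replace ((x - h) - (y - h)) with (x - y) by ring. auto.
  - replace (x + d - h) with ((x - h) + d) by ring. replace (x - d - h) with ((x - h) - d) by ring. auto.
Qed.

Lemma S3_add L0 L1 L2 M0 M1 M2 f g : S3 L0 L1 L2 f -> S3 M0 M1 M2 g ->
  S3 (L0 + M0) (L1 + M1) (L2 + M2) (fun x => f x + g x).
Proof.
  intros [F0 [F1 F2]] [G0 [G1 G2]]. split; [|split]; intros.
  - eapply Rle_trans. apply Rabs_triang. apply Rplus_le_compat; auto.
  - replace (f x + g x - (f y + g y)) with ((f x - f y) + (g x - g y)) by ring.
    eapply Rle_trans. apply Rabs_triang. rewrite Rmult_plus_distr_r. apply Rplus_le_compat; auto.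
  - replace (f (x + d) + g (x + d) + (f (x - d) + g (x - d)) - 2 * (f x + g x)) with
      ((f (x + d) + f (x - d) - 2 * f x) + (g (x + d) + g (x - d) - 2 * g x)) by ring.
    eapply Rle_trans. apply Rabs_triang. rewrite Rmult_plus_distr_r. apply Rplus_le_compat; auto.
Qed.

Lemma abs_mul_le a b A B : Rabs a <= A -> Rabs b <= B -> Rabs (a * b) <= A * B.
Proof.
  intros. rewrite Rabs_mult. apply Rmult_le_compat; auto; apply Rabs_pos.
Qed.

Lemma S3_mul L0 L1 L2 M0 M1 M2 f g : S3 L0 L1 L2 f -> S3 M0 M1 M2 g ->
  S3 (L0 * M0) (L0 * M1 + L1 * M0) (L0 * M2 + L2 * M0 + 2 * (L1 * M1)) (fun x => f x * g x).
Proof.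
  intros Hf Hg. destruct (S3_nonneg _ _ _ _ Hf) as [l0 [l1 l2]].
  destruct (S3_nonneg _ _ _ _ Hg) as [m0 [m1 m2]].
  destruct Hf as [F0 [F1 F2]], Hg as [G0 [G1 G2]]. split; [|split]; intros.
  - apply abs_mul_le; auto.
  - replace (f x * g x - f y * g y) with (f x * (g x - g y) + (f x - f y) * g y) by ring.
    eapply Rle_trans. apply Rabs_triang.
    replace ((L0 * M1 + L1 * M0) * Rabs (x - y)) with (L0 * (M1 * Rabs (x - y)) + (L1 * Rabs (x - y)) * M0) by ring.
    apply Rplus_le_compat; apply abs_mul_le; auto.
  - set (a := f (x + d) - f x). set (b := g (x + d) - g x).
    set (a' := f (x - d) - f x). set (b' := g (x - d) - g x).
    assert (Ha : Rabs a <= L1 * d).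
    { unfold a. replace d with (Rabs ((x + d) - x)) at 2. apply F1. 
      replace (x + d - x) with d by ring. rewrite Rabs_pos_eq; lra.
      replace (x + d - x) with d by ring. rewrite Rabs_pos_eq; lra. }
    assert (Hb : Rabs b <= M1 * d).
    { unfold b. replace d with (Rabs ((x + d) - x)) at 2. apply G1. 
      replace (x + d - x) with d by ring. rewrite Rabs_pos_eq; lra.
      replace (x + d - x) with d by ring. rewrite Rabs_pos_eq; lra. }
    assert (Ha' : Rabs a' <= L1 * d).
    { unfold a'. replace d with (Rabs ((x - d) - x)) at 2. apply F1. 
      replace (x - d - x) with (- d) by ring. rewrite Rabs_Ropp, Rabs_pos_eq; lra.
      replace (x - d - x) with (-d) by ring. rewrite Rabs_Ropp, Rabs_pos_eq; lra. }
    assert (Hb' : Rabs b' <= M1 * d).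
    { unfold b'. replace d with (Rabs ((x - d) - x)) at 2. apply G1. 
      replace (x - d - x) with (- d) by ring. rewrite Rabs_Ropp, Rabs_pos_eq; lra.
      replace (x - d - x) with (-d) by ring. rewrite Rabs_Ropp, Rabs_pos_eq; lra. }
    replace (f (x + d) * g (x + d) + f (x - d) * g (x - d) - 2 * (f x * g x)) with
      (f x * (g (x + d) + g (x - d) - 2 * g x) + (f (x + d) + f (x - d) - 2 * f x) * g x + (a * b + a' * b'))
      by (unfold a, b, a', b'; ring).
    eapply Rle_trans. apply Rabs_triang.
    eapply Rle_trans. apply Rplus_le_compat_r. apply Rabs_triang.
    eapply Rle_trans. apply Rplus_le_compat. apply Rplus_le_compat.
    apply abs_mul_le. apply F0. apply G2; auto.
    apply abs_mul_le. apply F2; auto. apply G0.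
    eapply Rle_trans. apply Rabs_triang. apply Rplus_le_compat; apply abs_mul_le; eauto.
    right. ring.
Qed.

Lemma S3_smooth f f1 L0 L1 L2 : (forall x, is_derive f x (f1 x)) ->
  (forall x, Rabs (f x) <= L0) -> (forall x, Rabs (f1 x) <= L1) ->
  (forall x y, Rabs (x - y) <= 2 -> Rabs (f1 x - f1 y) <= L2 * Rabs (x - y)) ->
  S3 L0 L1 (2 * L2) f.
Proof.
  intros Hd B0 B1 B2. split; [|split]; auto.
  - intros x y _. destruct (MVT_full f f1 Hd y x) as [c [_ E]]. rewrite E, Rabs_mult.
    apply Rmult_le_compat_r; auto. apply Rabs_pos.
  - intros x d Hdd. destruct (MVT_full f f1 Hd x (x + d)) as [c1 [Hc1 E1]].
    destruct (MVT_full f f1 Hd x (x - d)) as [c2 [Hc2 E2]].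
    rewrite Rmin_left in Hc1 by lra. rewrite Rmax_right in Hc1 by lra.
    rewrite Rmin_right in Hc2 by lra. rewrite Rmax_left in Hc2 by lra.
    replace (f (x + d) + f (x - d) - 2 * f x) with ((f (x + d) - f x) + (f (x - d) - f x)) by ring.
    rewrite E1, E2. replace (f1 c1 * (x + d - x) + f1 c2 * (x - d - x)) with ((f1 c1 - f1 c2) * d) by ring.
    rewrite Rabs_mult, (Rabs_pos_eq d) by lra.
    assert (Hc : Rabs (c1 - c2) <= 2 * d) by (unfold Rabs; destruct Rcase_abs; lra).
    assert (0 <= L2).
    { specialize (B2 1 0). replace (1 - 0) with 1 in B2 by ring. rewrite Rabs_R1 in B2.
      pose proof (Rabs_pos (f1 1 - f1 0)). lra. }
    eapply Rle_trans. apply Rmult_le_compat_r. lra. apply B2. lra.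
    replace (2 * L2 * d ^ 2) with ((L2 * (2 * d)) * d) by ring.
    apply Rmult_le_compat_r. lra. apply Rmult_le_compat_l; auto.
Qed.

Lemma LIM1 (F : R -> R) x l C : is_derive F x l ->
  (forall d, 0 < d <= 1 -> Rabs (F (x + d) - F x) <= C * d) -> Rabs l <= C.
Proof.
  intros Hd HB. apply le_epsilon. intros eps He.
  apply is_derive_Reals in Hd. destruct (Hd eps He) as [del Hdel].
  set (h := Rmin (del / 2) 1).
  assert (Hh : 0 < h <= 1). { unfold h. split. apply Rmin_pos. pose proof (cond_pos del). lra. lra. apply Rmin_r. }
  assert (Hh2 : h < del). { unfold h. eapply Rle_lt_trans. apply Rmin_l. pose proof (cond_pos del). lra. }
  specialize (Hdel h ltac:(lra) ltac:(rewrite Rabs_pos_eq; lra)).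
  specialize (HB h Hh).
  assert (Rabs ((F (x + h) - F x) / h) <= C).
  { unfold Rdiv. rewrite Rabs_mult, Rabs_inv, (Rabs_pos_eq h) by lra.
    apply Rmult_le_reg_r with h. lra. rewrite Rmult_assoc, Rinv_l by lra. lra. }
  replace l with ((F (x + h) - F x) / h - ((F (x + h) - F x) / h - l)) by ring.
  eapply Rle_trans. apply Rabs_triang. rewrite Rabs_Ropp. lra.
Qed.

Lemma LIM2_up (F F1 : R -> R) x l C : (forall y, is_derive F y (F1 y)) -> is_derive F1 x l ->
  (forall d, 0 < d <= 1 -> F (x + d) + F (x - d) - 2 * F x <= C * d ^ 2) -> l <= C.
Proof.
  intros Hd Hd1 HB. apply le_epsilon. intros eps He.
  apply is_derive_Reals in Hd1. destruct (Hd1 eps He) as [del Hdel].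
  set (k := l - eps).
  set (psi := fun s => F (x + s) + F (x - s) - 2 * F x - k * s ^ 2).
  set (dpsi := fun s => F1 (x + s) - F1 (x - s) - 2 * k * s).
  assert (Hpd : forall s, is_derive psi s (dpsi s)).
  { intros s. unfold psi, dpsi.
    replace (F1 (x + s) - F1 (x - s) - 2 * k * s) with (F1 (x + s) + - F1 (x - s) - 0 - k * (2 * s)) by ring.
    apply (is_derive_minus (fun s => F (x + s) + F (x - s) - 2 * F x) (fun s => k * s ^ 2)).
    apply (is_derive_minus (fun s => F (x + s) + F (x - s)) (fun _ => 2 * F x)).
    apply (is_derive_plus (fun s => F (x + s)) (fun s => F (x - s))).
    apply is_derive_shp. apply Hd. apply is_derive_shm. apply Hd.
    auto_derive; auto. auto_derive; auto. ring. }
  set (d := Rmin (del / 2) 1).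
  assert (Hdd : 0 < d <= 1). { unfold d. split. apply Rmin_pos. pose proof (cond_pos del). lra. lra. apply Rmin_r. }
  assert (Hd2 : d < del). { unfold d. eapply Rle_lt_trans. apply Rmin_l. pose proof (cond_pos del). lra. }
  destruct (MVT_full psi dpsi Hpd 0 d) as [c [Hc E]].
  rewrite Rmin_left in Hc by lra. rewrite Rmax_right in Hc by lra.
  assert (Hdp : 0 <= dpsi c).
  { unfold dpsi. destruct (Req_dec c 0) as [->|Hc0].
    - rewrite Rplus_0_r, Rminus_0_r. lra.
    - assert (Hcd : Rabs c < del) by (rewrite Rabs_pos_eq; lra).
      pose proof (Hdel c Hc0 Hcd) as H1.
      pose proof (Hdel (- c) ltac:(lra) ltac:(rewrite Rabs_Ropp; auto)) as H2.
      replace (x + - c) with (x - c) in H2 by ring.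
      assert (A1 : l - eps < (F1 (x + c) - F1 x) / c) by (unfold Rabs in H1; destruct Rcase_abs in H1; lra).
      assert (A2 : l - eps < (F1 (x - c) - F1 x) / - c) by (unfold Rabs in H2; destruct Rcase_abs in H2; lra).
      assert (B1 : (l - eps) * c < F1 (x + c) - F1 x).
      { apply Rmult_lt_compat_r with (r := c) in A1. unfold Rdiv in A1. rewrite Rmult_assoc, Rinv_l in A1 by lra. lra. lra. }
      assert (B2 : (l - eps) * c < - (F1 (x - c) - F1 x)).
      { apply Rmult_lt_compat_r with (r := c) in A2. unfold Rdiv in A2.
        replace ((F1 (x - c) - F1 x) * / - c * c) with (- (F1 (x - c) - F1 x) * (/ c * c)) in A2 by (field; lra).
        rewrite Rinv_l in A2 by lra. lra. lra. }
      unfold k. lra. }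
  assert (psi 0 = 0). { unfold psi. rewrite Rplus_0_r, Rminus_0_r. ring. }
  assert (0 <= psi d). { replace (psi d) with (psi d - psi 0) by (rewrite H; ring).
    rewrite E. apply Rmult_le_pos; lra. }
  unfold psi in H0. specialize (HB d Hdd). unfold k in H0.
  assert ((l - eps) * d ^ 2 <= C * d ^ 2) by lra.
  apply Rmult_le_reg_r in H1. lra. apply pow_lt. lra.
Qed.

Lemma LIM2 (F F1 : R -> R) x l C : (forall y, is_derive F y (F1 y)) -> is_derive F1 x l ->
  (forall d, 0 < d <= 1 -> Rabs (F (x + d) + F (x - d) - 2 * F x) <= C * d ^ 2) -> Rabs l <= C.
Proof.
  intros Hd Hd1 HB. unfold Rabs at 1. destruct Rcase_abs.
  - assert (- l <= C); [|lra].
    apply (LIM2_up (fun y => - F y) (fun y => - F1 y) x). intros; apply is_derive_Reals; apply (derivable_pt_lim_opp F); apply is_derive_Reals; auto.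
    apply is_derive_Reals; apply (derivable_pt_lim_opp F1); apply is_derive_Reals; auto.
    intros d Hd0. specialize (HB d Hd0). unfold Rabs in HB; destruct Rcase_abs in HB; lra.
  - apply (LIM2_up F F1 x); auto. intros d Hd0. specialize (HB d Hd0). unfold Rabs in HB; destruct Rcase_abs in HB; lra.
Qed.

Definition cont2 (a b c d : R) (w : R -> R -> R) : Prop :=
  forall x t, a <= x <= b -> c <= t <= d ->
  forall eps, 0 < eps -> exists del, 0 < del /\
    forall y s, a <= y <= b -> c <= s <= d ->
      Rabs (y - x) < del -> Rabs (s - t) < del -> Rabs (w y s - w x t) < eps.

Lemma cont_rect_cont2 T w : cont_rect T w -> cont2 0 (2 * PI) 0 T w.
Proof. exact (fun H => H). Qed.

Lemma UC a b c d w : cont2 a b c d w -> forall eps, 0 < eps -> exists del, 0 < del /\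
  forall x t y s, a <= x <= b -> c <= t <= d -> a <= y <= b -> c <= s <= d ->
   Rabs (x - y) < del -> Rabs (t - s) < del -> Rabs (w x t - w y s) < eps.
Proof.
  intros Hc eps He.
  assert (Hr : forall u v, exists r, 0 < r /\ (a <= u <= b -> c <= v <= d ->
     forall y s, a <= y <= b -> c <= s <= d -> Rabs (y - u) < r -> Rabs (s - v) < r ->
       Rabs (w y s - w u v) < eps / 2)).
  { intros u v. destruct (classic (a <= u <= b /\ c <= v <= d)) as [[H1 H2]|Hn].
    - destruct (Hc u v H1 H2 (eps/2) ltac:(lra)) as [r [Hr H]]. exists r. split; auto.
    - exists 1. split. lra. intros H1 H2. exfalso. tauto. }
  set (r := fun u v => proj1_sig (constructive_indefinite_description _ (Hr u v))).
  assert (Hrp : forall u v, 0 < r u v / 2).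
  { intros u v. unfold r. pose proof (proj1 (proj2_sig (constructive_indefinite_description _ (Hr u v)))). lra. }
  assert (Hrs : forall u v, a <= u <= b -> c <= v <= d ->
     forall y s, a <= y <= b -> c <= s <= d -> Rabs (y - u) < r u v -> Rabs (s - v) < r u v ->
       Rabs (w y s - w u v) < eps / 2).
  { intros u v. unfold r. exact (proj2 (proj2_sig (constructive_indefinite_description _ (Hr u v)))). }
  destruct (compactness_value_2d a b c d (fun u v => mkposreal _ (Hrp u v))) as [dd Hdd].
  exists dd. split. apply cond_pos.
  intros x t y s Hx Ht Hy Hs Hxy Hts.
  specialize (Hdd x t Hx Ht). apply NNPP in Hdd. destruct Hdd as [u [v [Hu [Hv [H1 [H2 H3]]]]]].
  simpl in H1, H2, H3. pose proof (Hrp u v).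
  assert (A1 : Rabs (w x t - w u v) < eps / 2).
  { apply Hrs; auto; lra. }
  assert (A2 : Rabs (w y s - w u v) < eps / 2).
  { apply Hrs; auto.
    replace (y - u) with ((y - x) + (x - u)) by ring. eapply Rle_lt_trans. apply Rabs_triang.
    rewrite Rabs_minus_sym in Hxy. lra.
    replace (s - v) with ((s - t) + (t - v)) by ring. eapply Rle_lt_trans. apply Rabs_triang.
    rewrite Rabs_minus_sym in Hts. lra. }
  replace (w x t - w y s) with ((w x t - w u v) - (w y s - w u v)) by ring.
  eapply Rle_lt_trans. apply Rabs_triang. rewrite Rabs_Ropp. lra.
Qed.

Lemma EVT2 a b c d w : a <= b -> c <= d -> cont2 a b c d w ->
  exists xs ts, a <= xs <= b /\ c <= ts <= d /\
   forall x t, a <= x <= b -> c <= t <= d -> w x t <= w xs ts.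
Proof.
  intros Hab Hcd Hc.
  assert (Hx : forall t, exists x, c <= t <= d -> a <= x <= b /\ forall x', a <= x' <= b -> w x' t <= w x t).
  { intros t. destruct (classic (c <= t <= d)) as [Ht|Hn].
    - destruct (EVT1_rel a b (fun x => w x t) Hab) as [x [H1 H2]].
      + intros x Hx eps He. destruct (Hc x t Hx Ht eps He) as [del [Hd H]].
        exists del. split; auto. intros y Hy Hyx. apply H; auto. rewrite Rminus_eq_0, Rabs_R0. auto.
      + exists x. auto.
    - exists a. tauto. }
  set (xm := fun t => proj1_sig (constructive_indefinite_description _ (Hx t))).
  assert (Hxm : forall t, c <= t <= d -> a <= xm t <= b /\ forall x', a <= x' <= b -> w x' t <= w (xm t) t).
  { intros t. unfold xm. exact (proj2_sig (constructive_indefinite_description _ (Hx t))). }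
  assert (Hm : cont_on c d (fun t => w (xm t) t)).
  { intros t Ht eps He. destruct (UC a b c d w Hc eps He) as [del [Hd H]].
    exists del. split; auto. intros s Hs Hst.
    destruct (Hxm t Ht) as [Ht1 Ht2]. destruct (Hxm s Hs) as [Hs1 Hs2].
    assert (E1 := H (xm s) s (xm s) t Hs1 Hs Hs1 Ht ltac:(rewrite Rminus_eq_0, Rabs_R0; lra) Hst).
    assert (E2 := H (xm t) s (xm t) t Ht1 Hs Ht1 Ht ltac:(rewrite Rminus_eq_0, Rabs_R0; lra) Hst).
    specialize (Hs2 (xm t) Ht1). specialize (Ht2 (xm s) Hs1).
    unfold Rabs in *. repeat destruct Rcase_abs; lra. }
  destruct (EVT1_rel c d _ Hcd Hm) as [ts [Hts H]].
  exists (xm ts), ts. destruct (Hxm ts Hts) as [H1 H2]. split; auto. split; auto.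
  intros x t Hx' Ht. eapply Rle_trans. apply (proj2 (Hxm t Ht)). auto. apply H. auto.
Qed.

Lemma deriv_max0 (f : R -> R) (x l r : R) : 0 < r -> is_derive f x l -> (forall y, Rabs (y - x) < r -> f y <= f x) -> l = 0.
Proof.
  intros Hr Hd Hm. apply is_derive_Reals in Hd.
  destruct (Rtotal_order l 0) as [Hl|[Hl|Hl]]; auto; exfalso.
  - destruct (Hd (- l / 2) ltac:(lra)) as [del Hdel].
    set (h := - Rmin (del / 2) (r / 2)).
    assert (Hh : 0 < - h < del /\ - h < r).
    { unfold h. pose proof (cond_pos del). split; [split|].
      rewrite Ropp_involutive. apply Rmin_pos; lra. rewrite Ropp_involutive. eapply Rle_lt_trans. apply Rmin_l. lra.
      rewrite Ropp_involutive. eapply Rle_lt_trans. apply Rmin_r. lra. }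
    specialize (Hdel h ltac:(lra) ltac:(rewrite Rabs_left; lra)).
    specialize (Hm (x + h) ltac:(replace (x + h - x) with h by ring; rewrite Rabs_left; lra)).
    assert ((f (x + h) - f x) / h >= 0).
    { unfold Rdiv. replace ((f (x + h) - f x) * / h) with ((f x - f (x + h)) * / - h) by (field; lra).
      apply Rle_ge, Rmult_le_pos. lra. left. apply Rinv_0_lt_compat. lra. }
    unfold Rabs in Hdel; destruct Rcase_abs in Hdel; lra.
  - destruct (Hd (l / 2) ltac:(lra)) as [del Hdel].
    set (h := Rmin (del / 2) (r / 2)).
    assert (Hh : 0 < h < del /\ h < r).
    { unfold h. pose proof (cond_pos del). split; [split|].
      apply Rmin_pos; lra. eapply Rle_lt_trans. apply Rmin_l. lra.
      eapply Rle_lt_trans. apply Rmin_r. lra. }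
    specialize (Hdel h ltac:(lra) ltac:(rewrite Rabs_pos_eq; lra)).
    specialize (Hm (x + h) ltac:(replace (x + h - x) with h by ring; rewrite Rabs_pos_eq; lra)).
    assert ((f (x + h) - f x) / h <= 0).
    { unfold Rdiv. replace ((f (x + h) - f x) * / h) with (- ((f x - f (x + h)) * / h)) by (field; lra).
      assert (0 <= (f x - f (x + h)) * / h) by (apply Rmult_le_pos; [lra| left; apply Rinv_0_lt_compat; lra]). lra. }
    unfold Rabs in Hdel; destruct Rcase_abs in Hdel; lra.
Qed.

Lemma deriv_time_left (g : R -> R) (t l r : R) : 0 < r -> is_derive g t l -> (forall s, t - r < s < t -> g s <= g t) -> 0 <= l.
Proof.
  intros Hr Hd Hm. apply is_derive_Reals in Hd.
  destruct (Rle_or_lt 0 l) as [|Hl]; auto; exfalso.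
  destruct (Hd (- l / 2) ltac:(lra)) as [del Hdel].
  set (h := - Rmin (del / 2) (r / 2)).
  assert (Hh : 0 < - h < del /\ - h < r).
  { unfold h. pose proof (cond_pos del). split; [split|].
    rewrite Ropp_involutive. apply Rmin_pos; lra. rewrite Ropp_involutive. eapply Rle_lt_trans. apply Rmin_l. lra.
    rewrite Ropp_involutive. eapply Rle_lt_trans. apply Rmin_r. lra. }
  specialize (Hdel h ltac:(lra) ltac:(rewrite Rabs_left; lra)).
  specialize (Hm (t + h) ltac:(lra)).
  assert ((g (t + h) - g t) / h >= 0).
  { unfold Rdiv. replace ((g (t + h) - g t) * / h) with ((g t - g (t + h)) * / - h) by (field; lra).
    apply Rle_ge, Rmult_le_pos. lra. left. apply Rinv_0_lt_compat. lra. }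
  unfold Rabs in Hdel; destruct Rcase_abs in Hdel; lra.
Qed.

Lemma deriv2_max (f f1 : R -> R) (x l r : R) : 0 < r -> (forall y, is_derive f y (f1 y)) -> is_derive f1 x l ->
  f1 x = 0 -> (forall y, Rabs (y - x) < r -> f y <= f x) -> l <= 0.
Proof.
  intros Hr Hd Hd1 H0 Hm. apply is_derive_Reals in Hd1.
  destruct (Rle_or_lt l 0) as [|Hl]; auto; exfalso.
  destruct (Hd1 (l / 2) ltac:(lra)) as [del Hdel].
  assert (Hpos : forall h, 0 < h < del -> 0 < f1 (x + h)).
  { intros h Hh. specialize (Hdel h ltac:(lra) ltac:(rewrite Rabs_pos_eq; lra)).
    rewrite H0 in Hdel. assert (l / 2 < (f1 (x + h) - 0) / h) by (unfold Rabs in Hdel; destruct Rcase_abs in Hdel; lra).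
    apply Rmult_lt_compat_r with (r := h) in H; [|lra].
    replace ((f1 (x + h) - 0) / h * h) with (f1 (x + h)) in H by (field; lra). nra. }
  set (q := Rmin (del / 2) (r / 2)).
  assert (Hq : 0 < q < del /\ q < r).
  { unfold q. pose proof (cond_pos del). split; [split|].
    apply Rmin_pos; lra. eapply Rle_lt_trans. apply Rmin_l. lra.
    eapply Rle_lt_trans. apply Rmin_r. lra. }
  destruct (MVT_full f f1 Hd (x + q / 2) (x + q)) as [c1 [Hc1 E1]].
  destruct (MVT_full f f1 Hd x (x + q / 2)) as [c2 [Hc2 E2]].
  rewrite Rmin_left in Hc1, Hc2 by lra. rewrite Rmax_right in Hc1, Hc2 by lra.
  assert (P1 : 0 < f1 c1). { replace c1 with (x + (c1 - x)) by ring. apply Hpos. lra. }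
  assert (P2 : 0 <= f1 c2). { destruct (Req_dec c2 x) as [->|Hne]. lra.
    left. replace c2 with (x + (c2 - x)) by ring. apply Hpos. lra. }
  specialize (Hm (x + q) ltac:(replace (x + q - x) with q by ring; rewrite Rabs_pos_eq; lra)).
  assert (f (x + q) - f (x + q / 2) > 0) by (rewrite E1; apply Rmult_gt_0_compat; lra).
  assert (f (x + q / 2) - f x >= 0) by (rewrite E2; apply Rle_ge, Rmult_le_pos; lra).
  lra.
Qed.

Lemma cont2_lin (a b c d c' d' : R) (z : R -> R -> R) (K : R) : cont2 a b c d z -> c <= c' -> d' <= d ->
  cont2 a b c' d' (fun x t => z x t - K * t).
Proof.
  intros Hc H1 H2 x t Hx Ht eps He.
  destruct (Hc x t Hx ltac:(lra) (eps / 2) ltac:(lra)) as [del [Hd H]].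
  exists (Rmin del (eps / 2 / (Rabs K + 1))). split.
  apply Rmin_pos; auto. apply Rdiv_lt_0_compat. lra. pose proof (Rabs_pos K); lra.
  intros y s Hy Hs Hyx Hst.
  replace (z y s - K * s - (z x t - K * t)) with ((z y s - z x t) - K * (s - t)) by ring.
  eapply Rle_lt_trans. apply Rabs_triang. rewrite Rabs_Ropp, Rabs_mult.
  assert (A1 : Rabs (z y s - z x t) < eps / 2).
  { apply H; try lra. eapply Rlt_le_trans; [apply Hyx|apply Rmin_l]. eapply Rlt_le_trans; [apply Hst|apply Rmin_l]. }
  assert (A2 : Rabs (s - t) < eps / 2 / (Rabs K + 1)) by (eapply Rlt_le_trans; [apply Hst|apply Rmin_r]).
  assert (A3 : Rabs K * Rabs (s - t) <= eps / 2).
  { pose proof (Rabs_pos K). pose proof (Rabs_pos (s - t)).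
    apply Rmult_lt_compat_l with (r := Rabs K + 1) in A2; [|lra].
    replace ((Rabs K + 1) * (eps / 2 / (Rabs K + 1))) with (eps / 2) in A2 by (field; lra). nra. }
  lra.
Qed.

Lemma MP (alpha T : R) (z zx zxx zt : R -> R -> R) (A B : R) :
  0 < alpha -> 0 < T ->
  (forall x t, 0 <= t <= T -> z (x + 2 * PI) t = z x t) ->
  (forall x t, 0 < t < T -> is_derive (fun y => z y t) x (zx x t) /\
     is_derive (fun y => zx y t) x (zxx x t) /\ is_derive (fun s => z x s) t (zt x t)) ->
  cont2 0 (2 * PI) 0 T z ->
  (forall x t, 0 < t < T -> zt x t - alpha * zxx x t <= B) ->
  (forall x, 0 <= x <= 2 * PI -> z x 0 <= A) ->
  forall x t, 0 <= x <= 2 * PI -> 0 < t < T -> z x t <= A + B * t.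
Proof.
  intros Ha HT Hp Hd Hc Heq H0 x0 t1 Hx0 Ht1. pose proof PI_gt1.
  assert (Key : forall e, 0 < e -> z x0 t1 <= A + (B + e) * t1).
  { intros e He.
    set (y := fun x t => z x t - (B + e) * t).
    assert (Hcy : cont2 0 (2 * PI) 0 t1 y) by (apply cont2_lin with 0 T; auto; lra).
    destruct (EVT2 0 (2 * PI) 0 t1 y ltac:(lra) ltac:(lra) Hcy) as [xs [ts [Hxs [Hts Hmax]]]].
    destruct (Rle_or_lt (y xs ts) A) as [Hle|Hgt].
    - specialize (Hmax x0 t1 Hx0 ltac:(lra)). unfold y in Hmax, Hle. lra.
    - exfalso.
      assert (Htsp : 0 < ts).
      { destruct (Req_dec ts 0) as [E|]; [|lra]. rewrite E in Hgt. unfold y in Hgt.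
        specialize (H0 xs Hxs). lra. }
      assert (Hts' : 0 < ts < T) by lra.
      destruct (Hd xs ts Hts') as [D1 [D2 D3]].
      assert (Hzx : forall x, 0 <= x <= 2 * PI -> z x ts <= z xs ts).
      { intros x Hx. specialize (Hmax x ts Hx ltac:(lra)). unfold y in Hmax. lra. }
      assert (Hloc : forall w, Rabs (w - xs) < 2 * PI -> z w ts <= z xs ts).
      { intros w Hw. assert (-2 * PI < w < 4 * PI) by (unfold Rabs in Hw; destruct Rcase_abs in Hw; lra).
        destruct (Rlt_or_le w 0).
        - rewrite <- (Hp w ts) by lra. apply Hzx. lra.
        - destruct (Rle_or_lt w (2 * PI)). apply Hzx; lra.
          replace w with ((w - 2 * PI) + 2 * PI) by ring. rewrite Hp by lra. apply Hzx. lra. }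
      assert (Ezx : zx xs ts = 0) by (apply (deriv_max0 (fun w => z w ts) xs _ (2 * PI)); auto; lra).
      assert (Ezxx : zxx xs ts <= 0).
      { apply (deriv2_max (fun w => z w ts) (fun w => zx w ts) xs _ (2 * PI)); auto. lra.
        intros w. apply (Hd w ts Hts'). }
      assert (Ezt : 0 <= zt xs ts - (B + e)).
      { apply (deriv_time_left (fun s => z xs s - (B + e) * s) ts _ ts); auto.
        apply (is_derive_minus (fun s => z xs s) (fun s => (B + e) * s)). auto.
        auto_derive; try auto; try ring.
        intros s Hs. specialize (Hmax xs s Hxs ltac:(lra)). unfold y in Hmax. lra. }
      specialize (Heq xs ts Hts'). nra. }
  apply le_epsilon. intros eps He. specialize (Key (eps / t1) ltac:(apply Rdiv_lt_0_compat; lra)).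
  replace (A + B * t1 + eps) with (A + (B + eps / t1) * t1) by (field; lra). auto.
Qed.

Lemma near_interior L x d : 0 < L -> 0 <= x <= L -> 0 < d -> exists y, 0 < y < L /\ Rabs (y - x) < d.
Proof.
  intros HL Hx Hd. set (m := Rmin d L / 4).
  assert (Hm : 0 < m /\ m <= d / 4 /\ m <= L / 4).
  { unfold m. split. apply Rdiv_lt_0_compat. apply Rmin_pos; lra. lra.
    split; apply Rmult_le_compat_r; try lra. apply Rmin_l. apply Rmin_r. }
  destruct (Rlt_dec x (L / 2)).
  - exists (x + m). split. lra. replace (x + m - x) with m by ring. rewrite Rabs_pos_eq; lra.
  - exists (x - m). split. lra. replace (x - m - x) with (- m) by ring. rewrite Rabs_Ropp, Rabs_pos_eq; lra.
Qed.

Lemma MVT_open (g dg : R -> R) a b : (forall s, a < s < b -> is_derive g s (dg s)) ->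
  forall u v, a < u < b -> a < v < b -> exists c, Rmin u v <= c <= Rmax u v /\ g v - g u = dg c * (v - u).
Proof.
  intros Hd u v Hu Hv. apply MVT_gen.
  - intros x Hx. apply Hd. split.
    eapply Rlt_le_trans; [|apply Rlt_le, Hx]. apply Rmin_case; lra.
    eapply Rlt_le_trans. apply Hx. apply Rmax_case; lra.
  - intros x Hx. apply continuity_pt_filterlim. apply (ex_derive_continuous g x).
    exists (dg x). apply Hd. split.
    eapply Rlt_le_trans; [|apply Hx]. apply Rmin_case; lra.
    eapply Rle_lt_trans. apply Hx. apply Rmax_case; lra.
Qed.

Lemma div_small a h e : h <> 0 -> Rabs a < e * Rabs h -> Rabs (a / h) < e.
Proof.
  intros Hh H. unfold Rdiv. rewrite Rabs_mult, Rabs_inv.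
  assert (0 < Rabs h) by (apply Rabs_pos_lt; auto).
  apply Rmult_lt_reg_r with (Rabs h). auto. rewrite Rmult_assoc, Rinv_l by lra. lra.
Qed.

Lemma BT (T : R) (w wt : R -> R -> R) : cont2 0 (2 * PI) 0 T w -> cont2 0 (2 * PI) 0 T wt ->
  (forall x t, 0 < x < 2 * PI -> 0 < t < T -> is_derive (fun s => w x s) t (wt x t)) ->
  forall x0 t, 0 <= x0 <= 2 * PI -> 0 < t < T -> is_derive (fun s => w x0 s) t (wt x0 t).
Proof.
  intros Hw Hwt Hd x0 t Hx0 Ht. pose proof PI_gt1. apply is_derive_Reals. intros eps He.
  destruct (Hwt x0 t Hx0 ltac:(lra) (eps / 2) ltac:(lra)) as [d1 [Hd1 H1]].
  assert (Hdp : 0 < Rmin d1 (Rmin t (T - t))) by (repeat apply Rmin_pos; lra).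
  exists (mkposreal _ Hdp). simpl. intros h Hh0 Hh.
  assert (Hh1 : Rabs h < d1) by (eapply Rlt_le_trans; [apply Hh|apply Rmin_l]).
  assert (Hh2 : Rabs h < t) by (eapply Rlt_le_trans; [apply Hh|]; eapply Rle_trans; [apply Rmin_r|apply Rmin_l]).
  assert (Hh3 : Rabs h < T - t) by (eapply Rlt_le_trans; [apply Hh|]; eapply Rle_trans; [apply Rmin_r|apply Rmin_r]).
  assert (Hth : 0 < t + h < T) by (unfold Rabs in *; destruct Rcase_abs; lra).
  assert (Hah : 0 < Rabs h) by (apply Rabs_pos_lt; auto).
  destruct (Hw x0 (t + h) Hx0 ltac:(lra) (eps / 4 * Rabs h) ltac:(nra)) as [d2 [Hd2 H2]].
  destruct (Hw x0 t Hx0 ltac:(lra) (eps / 4 * Rabs h) ltac:(nra)) as [d3 [Hd3 H3]].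
  destruct (near_interior (2 * PI) x0 (Rmin d1 (Rmin d2 d3)) ltac:(lra) Hx0 ltac:(repeat apply Rmin_pos; lra))
    as [x [Hx Hxx0]].
  assert (Hx1 : Rabs (x - x0) < d1) by (eapply Rlt_le_trans; [apply Hxx0|apply Rmin_l]).
  assert (Hx2 : Rabs (x - x0) < d2) by (eapply Rlt_le_trans; [apply Hxx0|]; eapply Rle_trans; [apply Rmin_r|apply Rmin_l]).
  assert (Hx3 : Rabs (x - x0) < d3) by (eapply Rlt_le_trans; [apply Hxx0|]; eapply Rle_trans; [apply Rmin_r|apply Rmin_r]).
  destruct (MVT_open (fun s => w x s) (fun s => wt x s) 0 T ltac:(intros; apply Hd; auto) t (t + h) ltac:(lra) Hth)
    as [c [Hc E]].
  assert (Hct : Rabs (c - t) < d1).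
  { eapply Rle_lt_trans; [|apply Hh1]. revert Hc. apply Rmin_case_strong; apply Rmax_case_strong; intros;
    unfold Rabs; repeat destruct Rcase_abs; lra. }
  assert (A1 : Rabs (wt x c - wt x0 t) < eps / 2).
  { apply H1; try lra. revert Hc. apply Rmin_case_strong; apply Rmax_case_strong; intros; lra. }
  assert (A2 : Rabs (w x (t + h) - w x0 (t + h)) < eps / 4 * Rabs h) by (apply H2; try lra; rewrite Rminus_eq_0, Rabs_R0; lra).
  assert (A3 : Rabs (w x t - w x0 t) < eps / 4 * Rabs h) by (apply H3; try lra; rewrite Rminus_eq_0, Rabs_R0; lra).
  replace ((w x0 (t + h) - w x0 t) / h - wt x0 t) with
    (- ((w x (t + h) - w x0 (t + h)) / h) + (wt x c - wt x0 t) + (w x t - w x0 t) / h).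
  2:{ replace (w x0 (t + h) - w x0 t) with (- (w x (t + h) - w x0 (t + h)) + (w x (t + h) - w x t) + (w x t - w x0 t)) by ring.
      rewrite E. replace (t + h - t) with h by ring. field. auto. }
  eapply Rle_lt_trans. apply Rabs_triang. eapply Rle_lt_trans. apply Rplus_le_compat_r. apply Rabs_triang.
  rewrite Rabs_Ropp.
  pose proof (div_small _ h (eps / 4) Hh0 A2). pose proof (div_small _ h (eps / 4) Hh0 A3). lra.
Qed.

Definition contR (T : R) (W : R -> R -> R) : Prop :=
  forall x t, 0 <= t <= T -> forall eps, 0 < eps -> exists del, 0 < del /\
    forall y s, 0 <= s <= T -> Rabs (y - x) < del -> Rabs (s - t) < del -> Rabs (W y s - W x t) < eps.

Lemma PC (T : R) (w : R -> R -> R) : cont2 0 (2 * PI) 0 T w ->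
  (forall t, 0 <= t <= T -> w 0 t = w (2 * PI) t) -> contR T (fun x t => w (red x) t).
Proof.
  intros Hw Hp x t Ht eps He. pose proof PI_gt1.
  destruct (red_repr x) as [[Hx1 Hx2] Hrx]. set (n := Int_part (x / (2 * PI))) in *.
  assert (Hy0 : 0 <= red x < 2 * PI) by (rewrite Hrx; lra).
  assert (Piece : forall (m : Z) y s, 0 <= s <= T -> 2 * PI * IZR m <= y <= 2 * PI * (IZR m + 1) ->
     w (red y) s = w (y - 2 * PI * IZR m) s).
  { intros m y s Hs Hy. apply (per_piece (fun u => w u s)); auto. }
  destruct (Hw (red x) t ltac:(lra) Ht eps He) as [d1 [Hd1 H1]].
  destruct (Rlt_or_le 0 (red x)) as [Hpos|Hz].
  - exists (Rmin d1 (Rmin (red x) (2 * PI - red x))). split. repeat apply Rmin_pos; lra.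
    intros y s Hs Hyx Hst.
    assert (Hh1 : Rabs (y - x) < d1) by (eapply Rlt_le_trans; [apply Hyx|apply Rmin_l]).
    assert (Hh2 : Rabs (y - x) < red x) by (eapply Rlt_le_trans; [apply Hyx|]; eapply Rle_trans; [apply Rmin_r|apply Rmin_l]).
    assert (Hh3 : Rabs (y - x) < 2 * PI - red x) by (eapply Rlt_le_trans; [apply Hyx|]; eapply Rle_trans; [apply Rmin_r|apply Rmin_r]).
    assert (Hab : - red x < y - x < 2 * PI - red x) by (unfold Rabs in *; destruct Rcase_abs; lra).
    rewrite (Piece n y s Hs) by lra. apply H1; try lra. 
    replace (y - 2 * PI * IZR n - red x) with (y - x) by lra. eapply Rlt_le_trans; [apply Hyx|apply Rmin_l].
    eapply Rlt_le_trans; [apply Hst|apply Rmin_l].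
  - assert (Ez : red x = 0) by lra.
    destruct (Hw (2 * PI) t ltac:(lra) Ht eps He) as [d2 [Hd2 H2]].
    exists (Rmin d1 (Rmin d2 (2 * PI))). split. repeat apply Rmin_pos; lra.
    intros y s Hs Hyx Hst.
    assert (Hh1 : Rabs (y - x) < d1) by (eapply Rlt_le_trans; [apply Hyx|apply Rmin_l]).
    assert (Hh2 : Rabs (y - x) < d2) by (eapply Rlt_le_trans; [apply Hyx|]; eapply Rle_trans; [apply Rmin_r|apply Rmin_l]).
    assert (Hh3 : Rabs (y - x) < 2 * PI) by (eapply Rlt_le_trans; [apply Hyx|]; eapply Rle_trans; [apply Rmin_r|apply Rmin_r]).
    assert (Hst1 : Rabs (s - t) < d1) by (eapply Rlt_le_trans; [apply Hst|apply Rmin_l]).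
    assert (Hst2 : Rabs (s - t) < d2) by (eapply Rlt_le_trans; [apply Hst|]; eapply Rle_trans; [apply Rmin_r|apply Rmin_l]).
    assert (HN : x = 2 * PI * IZR n) by lra.
    destruct (Rle_or_lt x y) as [hp|hn].
    + rewrite (Piece n y s Hs) by (unfold Rabs in *; destruct Rcase_abs; lra).
      apply H1; try lra. unfold Rabs in *; destruct Rcase_abs; lra.
      replace (y - 2 * PI * IZR n - red x) with (y - x) by lra. auto.
    + rewrite (Piece (n - 1)%Z y s Hs).
      2:{ rewrite minus_IZR. simpl. unfold Rabs in *; destruct Rcase_abs; lra. }
      rewrite Ez, (Hp t Ht). rewrite minus_IZR. simpl.
      apply H2; try lra. unfold Rabs in *; destruct Rcase_abs; lra.
      replace (y - 2 * PI * (IZR n - 1) - 2 * PI) with (y - x) by lra. auto.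
Qed.

Lemma contR_comb T W c1 c2 c3 d : contR T W ->
  contR T (fun x t => c1 * W (x + d) t + c2 * W (x - d) t + c3 * W x t).
Proof.
  intros HW x t Ht eps He.
  set (K := Rabs c1 + Rabs c2 + Rabs c3 + 1).
  assert (HK : 0 < K) by (unfold K; pose proof (Rabs_pos c1); pose proof (Rabs_pos c2); pose proof (Rabs_pos c3); lra).
  set (e := eps / K).
  assert (He' : 0 < e) by (apply Rdiv_lt_0_compat; lra).
  destruct (HW (x + d) t Ht e He') as [d1 [Hd1 H1]].
  destruct (HW (x - d) t Ht e He') as [d2 [Hd2 H2]].
  destruct (HW x t Ht e He') as [d3 [Hd3 H3]].
  exists (Rmin d1 (Rmin d2 d3)). split. repeat apply Rmin_pos; lra.
  intros y s Hs Hyx Hst.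
  assert (Hy1 : Rabs (y - x) < d1) by (eapply Rlt_le_trans; [apply Hyx|apply Rmin_l]).
  assert (Hy2 : Rabs (y - x) < d2) by (eapply Rlt_le_trans; [apply Hyx|]; eapply Rle_trans; [apply Rmin_r|apply Rmin_l]).
  assert (Hy3 : Rabs (y - x) < d3) by (eapply Rlt_le_trans; [apply Hyx|]; eapply Rle_trans; [apply Rmin_r|apply Rmin_r]).
  assert (Hs1 : Rabs (s - t) < d1) by (eapply Rlt_le_trans; [apply Hst|apply Rmin_l]).
  assert (Hs2 : Rabs (s - t) < d2) by (eapply Rlt_le_trans; [apply Hst|]; eapply Rle_trans; [apply Rmin_r|apply Rmin_l]).
  assert (Hs3 : Rabs (s - t) < d3) by (eapply Rlt_le_trans; [apply Hst|]; eapply Rle_trans; [apply Rmin_r|apply Rmin_r]).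
  assert (A1 : Rabs (W (y + d) s - W (x + d) t) < e) by (apply H1; auto; replace (y + d - (x + d)) with (y - x) by ring; auto).
  assert (A2 : Rabs (W (y - d) s - W (x - d) t) < e) by (apply H2; auto; replace (y - d - (x - d)) with (y - x) by ring; auto).
  assert (A3 : Rabs (W y s - W x t) < e) by (apply H3; auto).
  replace (c1 * W (y + d) s + c2 * W (y - d) s + c3 * W y s - (c1 * W (x + d) t + c2 * W (x - d) t + c3 * W x t))
    with (c1 * (W (y + d) s - W (x + d) t) + c2 * (W (y - d) s - W (x - d) t) + c3 * (W y s - W x t)) by ring.
  eapply Rle_lt_trans. apply Rabs_triang. eapply Rle_lt_trans. apply Rplus_le_compat_r. apply Rabs_triang.
  rewrite !Rabs_mult.
  assert (E1 : Rabs c1 * Rabs (W (y + d) s - W (x + d) t) <= Rabs c1 * e) by (apply Rmult_le_compat_l; [apply Rabs_pos|lra]).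
  assert (E2 : Rabs c2 * Rabs (W (y - d) s - W (x - d) t) <= Rabs c2 * e) by (apply Rmult_le_compat_l; [apply Rabs_pos|lra]).
  assert (E3 : Rabs c3 * Rabs (W y s - W x t) <= Rabs c3 * e) by (apply Rmult_le_compat_l; [apply Rabs_pos|lra]).
  assert (E4 : (Rabs c1 + Rabs c2 + Rabs c3) * e < eps).
  { unfold e. replace eps with (K * (eps / K)) at 2 by (field; lra). apply Rmult_lt_compat_r. auto. unfold K. lra. }
  lra.
Qed.

Lemma contR_cont2 T W : contR T W -> cont2 0 (2 * PI) 0 T W.
Proof.
  intros H x t Hx Ht eps He. destruct (H x t Ht eps He) as [d [Hd H1]]. exists d. split; auto.
Qed.

Lemma CB T w M : 0 < T -> cont2 0 (2 * PI) 0 T w ->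
  (forall x t, 0 < x < 2 * PI -> 0 < t < T -> Rabs (w x t) <= M) ->
  forall x t, 0 <= x <= 2 * PI -> 0 <= t <= T -> Rabs (w x t) <= M.
Proof.
  intros HT Hc Hb x t Hx Ht. pose proof PI_gt1.
  destruct (Rle_or_lt (Rabs (w x t)) M) as [|Hgt]; auto. exfalso.
  destruct (Hc x t Hx Ht (Rabs (w x t) - M) ltac:(lra)) as [d [Hd Hq]].
  destruct (near_interior (2 * PI) x d ltac:(lra) Hx Hd) as [y [Hy Hyx]].
  destruct (near_interior T t d HT Ht Hd) as [s [Hs Hst]].
  specialize (Hq y s ltac:(lra) ltac:(lra) Hyx Hst). specialize (Hb y s Hy Hs).
  pose proof (Rabs_triang_inv (w x t) (w y s)). rewrite Rabs_minus_sym in Hq. lra.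
Qed.

Lemma cont2_minus a b c d f g : cont2 a b c d f -> cont2 a b c d g -> cont2 a b c d (fun x t => f x t - g x t).
Proof.
  intros Hf Hg x t Hx Ht eps He.
  destruct (Hf x t Hx Ht (eps / 2) ltac:(lra)) as [d1 [Hd1 H1]].
  destruct (Hg x t Hx Ht (eps / 2) ltac:(lra)) as [d2 [Hd2 H2]].
  exists (Rmin d1 d2). split. apply Rmin_pos; lra. intros y s Hy Hs Hyx Hst.
  assert (A1 := H1 y s Hy Hs ltac:(eapply Rlt_le_trans; [apply Hyx|apply Rmin_l]) ltac:(eapply Rlt_le_trans; [apply Hst|apply Rmin_l])).
  assert (A2 := H2 y s Hy Hs ltac:(eapply Rlt_le_trans; [apply Hyx|apply Rmin_r]) ltac:(eapply Rlt_le_trans; [apply Hst|apply Rmin_r])).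
  replace (f y s - g y s - (f x t - g x t)) with ((f y s - f x t) - (g y s - g x t)) by ring.
  eapply Rle_lt_trans. apply Rabs_triang. rewrite Rabs_Ropp. lra.
Qed.

Lemma EQC T f g : 0 < T -> cont2 0 (2 * PI) 0 T f -> cont2 0 (2 * PI) 0 T g ->
  (forall x t, 0 < x < 2 * PI -> 0 < t < T -> f x t = g x t) ->
  forall x t, 0 <= x <= 2 * PI -> 0 <= t <= T -> f x t = g x t.
Proof.
  intros HT Hf Hg He x t Hx Ht.
  assert (H := CB T (fun x t => f x t - g x t) 0 HT (cont2_minus _ _ _ _ _ _ Hf Hg)).
  assert (Rabs (f x t - g x t) <= 0).
  { apply H; auto. intros. rewrite He by auto. rewrite Rminus_eq_0, Rabs_R0. lra. }
  pose proof (Rabs_pos (f x t - g x t)). assert (Rabs (f x t - g x t) = 0) by lra.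
  apply Rabs_eq_0 in H2. lra.
Qed.

Lemma is_derive_uniq (f : R -> R) x l1 l2 : is_derive f x l1 -> is_derive f x l2 -> l1 = l2.
Proof. intros H1 H2. apply is_derive_unique in H1. apply is_derive_unique in H2. congruence. Qed.

Lemma UQ T w wx wxx wt wx' wxx' wt' : 0 < T -> C21 T w wx wxx wt -> C21 T w wx' wxx' wt' ->
  forall x t, 0 <= x <= 2 * PI -> 0 <= t <= T ->
   wx x t = wx' x t /\ wxx x t = wxx' x t /\ wt x t = wt' x t.
Proof.
  intros HT [D [C0 [C1 [C2 C3]]]] [D' [C0' [C1' [C2' C3']]]] x t Hx Ht.
  assert (Ix : forall x t, 0 < x < 2 * PI -> 0 < t < T -> wx x t = wx' x t).
  { intros y s Hy Hs. apply (is_derive_uniq (fun z => w z s) y). apply D; auto. apply D'; auto. }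
  split; [|split].
  - apply EQC with T; auto.
  - apply EQC with T; auto. intros y s Hy Hs.
    apply (is_derive_uniq (fun z => wx z s) y). apply D; auto.
    apply is_derive_ext_loc with (fun z => wx' z s). 2: apply D'; auto.
    apply locally_R. exists (Rmin y (2 * PI - y)). split. apply Rmin_pos; lra.
    intros z Hz. symmetry. apply Ix; auto. revert Hz. apply Rmin_case_strong; intros; unfold Rabs in *; destruct Rcase_abs; lra.
  - apply EQC with T; auto. intros y s Hy Hs.
    apply (is_derive_uniq (fun z => w y z) s). apply D; auto. apply D'; auto.
Qed.

Lemma is_derive_shift (F : R -> R) (x dd l : R) : is_derive F (x + dd) l -> is_derive (fun y => F (y + dd)) x l.
Proof.
  intros H. assert (H1 : is_derive (fun y => y + dd) x 1) by (auto_derive; auto; ring).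
  pose proof (is_derive_comp F (fun y => y + dd) x l 1 H H1). simpl in H0.
  change (scal 1 l) with (1 * l) in H0. rewrite Rmult_1_l in H0. exact H0.
Qed.

Lemma is_derive_comb (F : R -> R) (F1 : R -> R) (c1 c2 c3 dd x : R) :
  (forall y, is_derive F y (F1 y)) ->
  is_derive (fun y => c1 * F (y + dd) + c2 * F (y - dd) + c3 * F y) x
    (c1 * F1 (x + dd) + c2 * F1 (x - dd) + c3 * F1 x).
Proof.
  intros H.
  apply (is_derive_plus (fun y => c1 * F (y + dd) + c2 * F (y - dd)) (fun y => c3 * F y)).
  apply (is_derive_plus (fun y => c1 * F (y + dd)) (fun y => c2 * F (y - dd))).
  apply (is_derive_scal (fun y => F (y + dd))). apply is_derive_shift. apply H.
  apply (is_derive_scal (fun y => F (y - dd))). apply (is_derive_shift F x (- dd)). apply H.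
  apply is_derive_scal. apply H.
Qed.

Lemma is_derive_comb_t (W Wt : R -> R -> R) (c1 c2 c3 dd x t : R) :
  is_derive (fun s => W (x + dd) s) t (Wt (x + dd) t) ->
  is_derive (fun s => W (x - dd) s) t (Wt (x - dd) t) ->
  is_derive (fun s => W x s) t (Wt x t) ->
  is_derive (fun s => c1 * W (x + dd) s + c2 * W (x - dd) s + c3 * W x s) t
    (c1 * Wt (x + dd) t + c2 * Wt (x - dd) t + c3 * Wt x t).
Proof.
  intros H1 H2 H3.
  apply (is_derive_plus (fun s => c1 * W (x + dd) s + c2 * W (x - dd) s) (fun s => c3 * W x s)).
  apply (is_derive_plus (fun s => c1 * W (x + dd) s) (fun s => c2 * W (x - dd) s)).
  apply (is_derive_scal (fun s => W (x + dd) s)). auto.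
  apply (is_derive_scal (fun s => W (x - dd) s)). auto.
  apply (is_derive_scal (fun s => W x s)). auto.
Qed.

Lemma MPcomb (alpha T : R) (V VX VXX VT Gf : R -> R -> R) (c1 c2 c3 dd A B : R) :
  0 < alpha -> 0 < T -> 0 <= B ->
  (forall x t, 0 <= t <= T -> V (x + 2 * PI) t = V x t) ->
  (forall x t, 0 < t < T -> is_derive (fun y => V y t) x (VX x t) /\
     is_derive (fun y => VX y t) x (VXX x t) /\ is_derive (fun s => V x s) t (VT x t)) ->
  contR T V ->
  (forall x t, 0 < t < T -> VT x t - alpha * VXX x t = Gf x t) ->
  (forall x t, 0 < t < T -> Rabs (c1 * Gf (x + dd) t + c2 * Gf (x - dd) t + c3 * Gf x t) <= B) ->
  (forall x, 0 <= x <= 2 * PI -> Rabs (c1 * V (x + dd) 0 + c2 * V (x - dd) 0 + c3 * V x 0) <= A) ->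
  forall x t, 0 <= x <= 2 * PI -> 0 < t < T ->
   Rabs (c1 * V (x + dd) t + c2 * V (x - dd) t + c3 * V x t) <= A + B * T.
Proof.
  intros Ha HT HB Hp Hd Hc Heq HG H0 x t Hx Ht.
  set (comb := fun (W : R -> R -> R) x t => c1 * W (x + dd) t + c2 * W (x - dd) t + c3 * W x t).
  assert (Per : forall s : R, forall x t, 0 <= t <= T -> s * comb V (x + 2 * PI) t = s * comb V x t).
  { intros s y r Hr. unfold comb.
    replace (y + 2 * PI + dd) with ((y + dd) + 2 * PI) by ring.
    replace (y + 2 * PI - dd) with ((y - dd) + 2 * PI) by ring. rewrite !Hp; auto. }
  assert (Der : forall s : R, forall x t, 0 < t < T ->
     is_derive (fun y => s * comb V y t) x (s * comb VX x t) /\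
     is_derive (fun y => s * comb VX y t) x (s * comb VXX x t) /\
     is_derive (fun r => s * comb V x r) t (s * comb VT x t)).
  { intros s y r Hr. unfold comb. split; [|split]; apply (is_derive_scal).
    - apply (is_derive_comb (fun y => V y r) (fun y => VX y r)). intros; apply Hd; auto.
    - apply (is_derive_comb (fun y => VX y r) (fun y => VXX y r)). intros; apply Hd; auto.
    - apply is_derive_comb_t; apply Hd; auto. }
  assert (Cont : forall s : R, cont2 0 (2 * PI) 0 T (fun x t => s * comb V x t)).
  { intros s. apply contR_cont2. unfold comb.
    assert (H := contR_comb T V (s * c1) (s * c2) (s * c3) dd Hc).
    intros y r Hr eps He. destruct (H y r Hr eps He) as [del [Hdel Hq]]. exists del. split; auto.
    intros. replace (s * (c1 * V (y0 + dd) s0 + c2 * V (y0 - dd) s0 + c3 * V y0 s0) -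
      s * (c1 * V (y + dd) r + c2 * V (y - dd) r + c3 * V y r)) with
      (s * c1 * V (y0 + dd) s0 + s * c2 * V (y0 - dd) s0 + s * c3 * V y0 s0 -
      (s * c1 * V (y + dd) r + s * c2 * V (y - dd) r + s * c3 * V y r)) by ring. auto. }
  assert (EqT : forall s x t, 0 < t < T -> s * comb VT x t - alpha * (s * comb VXX x t) = s * comb Gf x t).
  { intros s y r Hr. unfold comb. rewrite <- !Heq by auto. ring. }
  assert (Up : forall s, s = 1 \/ s = -1 -> s * comb V x t <= A + B * t).
  { intros s Hs.
    apply (MP alpha T (fun x t => s * comb V x t) (fun x t => s * comb VX x t) (fun x t => s * comb VXX x t)
      (fun x t => s * comb VT x t) A B Ha HT); [ | | apply Cont | | | exact Hx | exact Ht].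
    - intros y r Hr. apply Per; auto.
    - intros y r Hr. apply Der; auto.
    - intros y r Hr. rewrite EqT by auto. specialize (HG y r Hr). fold (comb Gf y r) in HG.
      destruct Hs as [-> | ->]; unfold Rabs in HG; destruct Rcase_abs in HG; lra.
    - intros y Hy. specialize (H0 y Hy). fold (comb V y 0) in H0.
      destruct Hs as [-> | ->]; unfold Rabs in H0; destruct Rcase_abs in H0; lra. }
  fold (comb V x t). pose proof (Up 1 (or_introl eq_refl)). pose proof (Up (-1) (or_intror eq_refl)).
  assert (B * t <= B * T) by (apply Rmult_le_compat_l; lra).
  unfold Rabs; destruct Rcase_abs; lra.
Qed.

Lemma cont2_slice T (w : R -> R -> R) t : cont2 0 (2 * PI) 0 T w -> 0 <= t <= T -> cont_on 0 (2 * PI) (fun y => w y t).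
Proof.
  intros Hc Ht x Hx eps He. destruct (Hc x t Hx Ht eps He) as [d [Hd H]].
  exists d. split; auto. intros y Hy Hyx. apply H; auto. rewrite Rminus_eq_0, Rabs_R0. auto.
Qed.

Lemma shift_red h (w : R -> R -> R) y t : 0 < h < 2 * PI -> 0 <= y < 2 * PI ->
  Defs.shift h w y t = w (red (y - h)) t.
Proof.
  intros Hh Hy. unfold Defs.shift. destruct Rlt_dec.
  - rewrite <- red_add2PI. rewrite red_id; auto. lra.
  - rewrite red_id; auto. lra.
Qed.

Lemma red_red_sub x h : red (red x - h) = red (x - h).
Proof.
  destruct (red_repr x) as [_ E]. rewrite E.
  replace (x - 2 * PI * IZR (Int_part (x / (2 * PI))) - h) with ((x - h) + 2 * PI * IZR (- Int_part (x / (2 * PI)))).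
  apply red_addZ. rewrite opp_IZR. ring.
Qed.

Lemma Fop_red (h : R) (k : R -> R) (u : R -> R -> R) (x t : R) : 0 < h < 2 * PI ->
  Fop h k u (red x) t = u (red x) t * (k (red x) * u (red (x - h)) t - fnl h k u t).
Proof.
  intros Hh. unfold Fop. rewrite shift_red; auto. rewrite red_red_sub. auto. apply red_bounds.
Qed.

Lemma S3_ext L0 L1 L2 f g : S3 L0 L1 L2 f -> (forall x, f x = g x) -> S3 L0 L1 L2 g.
Proof.
  intros [H0 [H1 H2]] E. split; [|split]; intros.
  rewrite <- E; auto. rewrite <- !E; auto. rewrite <- !E; auto.
Qed.

Lemma C2_on_sub a b c d f f1 f2 : a <= c -> d <= b -> C2_on a b f f1 f2 -> C2_on c d f f1 f2.
Proof.
  intros H1 H2 [D [C0 [C1 C3]]]. split; [|split; [|split]].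
  - intros x Hx. apply D. lra.
  - apply cont_on_sub with a b; auto.
  - apply cont_on_sub with a b; auto.
  - apply cont_on_sub with a b; auto.
Qed.

Lemma S3_per (f f1 f2 : R -> R) (L0 L1 L2 : R) : C2_on 0 (2 * PI) f f1 f2 -> f 0 = f (2 * PI) -> f1 0 = f1 (2 * PI) ->
  (forall x, 0 <= x <= 2 * PI -> Rabs (f x) <= L0 /\ Rabs (f1 x) <= L1 /\ Rabs (f2 x) <= L2) ->
  S3 L0 L1 (2 * L2) (fun x => f (red x)) /\ (forall x, is_derive (fun y => f (red y)) x (f1 (red x))).
Proof.
  intros [D [C0 [C1 C3]]] P0 P1 Hb.
  assert (Hd : forall x, is_derive (fun y => f (red y)) x (f1 (red x))).
  { apply GD; auto. intros; apply D; auto. }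
  split; auto.
  apply (S3_smooth _ (fun x => f1 (red x))); auto.
  - intros x. apply Hb. pose proof (red_bounds x). lra.
  - intros x. apply Hb. pose proof (red_bounds x). lra.
  - apply (PL f1 f2 L2); auto. intros; apply D; auto. intros; apply Hb; auto.
Qed.

Lemma C21_C2 T w wx wxx wt t : C21 T w wx wxx wt -> 0 < t < T ->
  C2_on 0 (2 * PI) (fun y => w y t) (fun y => wx y t) (fun y => wxx y t).
Proof.
  intros [D [C0 [C1 [C2 C3]]]] Ht. split; [|split; [|split]].
  - intros x Hx. destruct (D x t Hx Ht) as [D1 [D2 _]]. split; auto.
  - apply (cont2_slice T w t); auto; lra.
  - apply (cont2_slice T wx t); auto; lra.
  - apply (cont2_slice T wxx t); auto; lra.
Qed.

Lemma GS3 (U K : R -> R) h c kap a : S3 a a (2 * a) U -> S3 kap kap (2 * kap) K ->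
  Rabs c <= 8 * kap * a ^ 2 -> 1 <= a -> 0 <= kap ->
  S3 (28 * kap * a ^ 3) (28 * kap * a ^ 3) (28 * kap * a ^ 3) (fun x => U x * (K x * U (x - h) - c)).
Proof.
  intros HU HK Hc Ha Hk.
  assert (H1 := S3_mul _ _ _ _ _ _ _ _ HK (S3_shift _ _ _ U h HU)).
  assert (H2 := S3_add _ _ _ _ _ _ _ _ H1 (S3_const (- c) _ ltac:(rewrite Rabs_Ropp; exact Hc))).
  assert (H3 := S3_mul _ _ _ _ _ _ _ _ HU H2).
  eapply S3_ext. eapply S3_mono. apply H3.
  - assert (kap * a ^ 2 <= kap * a ^ 3). { apply Rmult_le_compat_l; auto. simpl. nra. }
    assert (0 <= kap * a ^ 3) by (apply Rmult_le_pos; auto; apply pow_le; lra).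
    simpl in *. nra.
  - assert (kap * a ^ 2 <= kap * a ^ 3). { apply Rmult_le_compat_l; auto. simpl. nra. }
    assert (0 <= kap * a ^ 3) by (apply Rmult_le_pos; auto; apply pow_le; lra).
    simpl in *. nra.
  - assert (kap * a ^ 2 <= kap * a ^ 3). { apply Rmult_le_compat_l; auto. simpl. nra. }
    assert (0 <= kap * a ^ 3) by (apply Rmult_le_pos; auto; apply pow_le; lra).
    simpl in *. nra.
  - intros x. simpl. ring.
Qed.

Lemma FB (h : R) (k : R -> R) (u : R -> R -> R) (t kap a : R) : 0 < h < 2 * PI ->
  (forall x, ex_derive (fun y => k (red y)) x) -> (forall x, ex_derive (fun y => u (red y) t) x) ->
  (forall x, Rabs (k (red x)) <= kap) -> (forall x, Rabs (u (red x) t) <= a) ->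
  Rabs (fnl h k u t) <= 8 * kap * a ^ 2.
Proof.
  intros Hh Dk Du Bk Bu. pose proof PI_gt1. pose proof PI_le4.
  set (g := fun y => k (red y) * u (red y) t * u (red (y - h)) t).
  unfold fnl. rewrite (RInt_ext _ g).
  2:{ intros x Hx. rewrite Rmin_left in Hx by lra. rewrite Rmax_right in Hx by lra.
      unfold g. rewrite shift_red by lra. rewrite (red_id x) by lra. reflexivity. }
  assert (Dg : forall x, ex_derive g x).
  { intros x. unfold g. apply ex_derive_mult. apply ex_derive_mult; auto.
    destruct (Du (x - h)) as [l Hl]. exists l. apply (is_derive_shift (fun y => u (red y) t) x (- h) l). exact Hl. }
  assert (Ig : ex_RInt g 0 (2 * PI)).
  { apply (ex_RInt_continuous (V:=R_CompleteNormedModule)). intros z _. apply continuity_pt_filterlim. apply continuity_pt_filterlim. apply (ex_derive_continuous g z). auto. }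
  eapply Rle_trans. apply (abs_RInt_le_const g 0 (2 * PI) (kap * a * a)). lra. auto.
  - intros x _. unfold g. rewrite !Rabs_mult. 
    apply Rmult_le_compat; try (apply Rmult_le_pos); try apply Rabs_pos. apply Rmult_le_compat; try apply Rabs_pos; auto. auto.
  - assert (0 <= kap) by (eapply Rle_trans; [apply Rabs_pos | apply (Bk 0)]).
    assert (0 <= a) by (eapply Rle_trans; [apply Rabs_pos | apply (Bu 0)]).
    assert (0 <= kap * a * a) by (repeat apply Rmult_le_pos; auto).
    simpl. nra.
Qed.

Lemma phi1_per (h : R) (phi phi1 phi2 : R -> R) : 0 < h < 2 * PI -> C2_on (- h) (2 * PI) phi phi1 phi2 ->
  (forall x, - h <= x <= 0 -> phi x = phi (x + 2 * PI)) -> phi1 0 = phi1 (2 * PI).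
Proof.
  intros Hh [D [C0 [C1 C3]]] Hp. pose proof PI_gt1.
  apply Rminus_diag_uniq. apply Rabs_eq_0. apply Rle_antisym; [|apply Rabs_pos].
  apply le_epsilon. intros eps He. rewrite Rplus_0_l.
  assert (D' : forall x, - h < x < 2 * PI -> is_derive phi x (phi1 x)) by (intros; apply D; auto).
  destruct (RD _ _ phi phi1 C0 C1 D' 0 ltac:(lra) (eps / 2) ltac:(lra)) as [d1 [Hd1 H1]].
  destruct (RD _ _ phi phi1 C0 C1 D' (2 * PI) ltac:(lra) (eps / 2) ltac:(lra)) as [d2 [Hd2 H2]].
  set (z := - Rmin (Rmin d1 d2) h / 2).
  assert (Hz : 0 < - z /\ - z < d1 /\ - z < d2 /\ - z <= h).
  { unfold z. assert (0 < Rmin (Rmin d1 d2) h) by (repeat apply Rmin_pos; lra).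
    assert (Rmin (Rmin d1 d2) h <= d1) by (eapply Rle_trans; apply Rmin_l).
    assert (Rmin (Rmin d1 d2) h <= d2) by (eapply Rle_trans; [apply Rmin_l|apply Rmin_r]).
    assert (Rmin (Rmin d1 d2) h <= h) by apply Rmin_r. lra. }
  specialize (H1 z ltac:(lra) ltac:(lra) ltac:(rewrite Rminus_0_r, Rabs_left; lra)).
  specialize (H2 (z + 2 * PI) ltac:(lra) ltac:(lra) ltac:(replace (z + 2 * PI - 2 * PI) with z by ring; rewrite Rabs_left; lra)).
  rewrite <- (Hp z) in H2 by lra. replace (phi (2 * PI)) with (phi 0) in H2 by (rewrite (Hp 0) by lra; f_equal; ring).
  replace (z + 2 * PI - 2 * PI) with (z - 0) in H2 by ring.
  replace (phi1 0 - phi1 (2 * PI)) with (- ((phi z - phi 0) / (z - 0) - phi1 0) + ((phi z - phi 0) / (z - 0) - phi1 (2 * PI))) by ring.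
  eapply Rle_trans. apply Rabs_triang. rewrite Rabs_Ropp. lra.
Qed.

Lemma STEP (h alpha T : R) (phi k : R -> R) (kap p a : R) (um ux uxx ut v : R -> R -> R) :
  0 < h < 2 * PI -> 0 < alpha -> 0 < T -> 1 <= p -> a = 3 * p -> 0 <= kap ->
  28 * kap * a ^ 3 * T <= p ->
  S3 p p (2 * p) (fun x => phi (red x)) ->
  S3 kap kap (2 * kap) (fun x => k (red x)) -> (forall x, ex_derive (fun y => k (red y)) x) ->
  k 0 = k (2 * PI) ->
  C21 T um ux uxx ut ->
  (forall t, 0 <= t <= T -> um 0 t = um (2 * PI) t /\ ux 0 t = ux (2 * PI) t) ->
  (forall x t, 0 <= x <= 2 * PI -> 0 <= t <= T -> Rabs (um x t) <= a /\ Rabs (ux x t) <= a /\ Rabs (uxx x t) <= a) ->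
  is_lin_solution alpha T phi (Fop h k um) v ->
  exists vx vxx vt, C21 T v vx vxx vt /\
    (forall t, 0 <= t <= T -> v 0 t = v (2 * PI) t /\ vx 0 t = vx (2 * PI) t) /\
    (forall x t, 0 <= x <= 2 * PI -> 0 <= t <= T ->
       Rabs (v x t) <= a /\ Rabs (vx x t) <= a /\ Rabs (vxx x t) <= a /\ Rabs (vt x t) <= alpha * a + p / T).
Proof.
  intros Hh Ha HT Hp1 Hae Hkap Hsmall HPhi HK DK Kper HCu Uper Ub Hv.
  pose proof PI_gt1.
  destruct Hv as [vx [vxx [vt [HC [Heq [Hin Hbc]]]]]]. exists vx, vxx, vt.
  split; [exact HC|]. split; [exact Hbc|].
  pose proof HC as [D [C0 [C1 [C2 C3]]]].
  set (gb := 28 * kap * a ^ 3).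
  assert (Ha1 : 1 <= a) by lra.
  assert (Hgb0 : 0 <= gb) by (unfold gb; apply Rmult_le_pos; [lra | apply pow_le; lra]).
  set (Gf := fun x t => Fop h k um (red x) t).
  assert (Ga : forall t, 0 < t < T -> S3 gb gb gb (fun x => Gf x t)).
  { intros t Ht.
    destruct (S3_per (fun y => um y t) (fun y => ux y t) (fun y => uxx y t) a a a (C21_C2 T um ux uxx ut t HCu Ht))
      as [SU DU].
    apply Uper; lra. apply Uper; lra. intros x Hx. apply Ub; auto; lra.
    assert (Hc : Rabs (fnl h k um t) <= 8 * kap * a ^ 2).
    { apply FB; auto. intros x. exists (ux (red x) t). apply DU. apply (proj1 HK). apply (proj1 SU). }
    eapply S3_ext. apply (GS3 (fun x => um (red x) t) (fun x => k (red x)) h (fnl h k um t) kap a); auto.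
    intros x. simpl. unfold Gf. rewrite Fop_red; auto. }
  assert (gper : forall t, 0 <= t <= T -> Fop h k um 0 t = Fop h k um (2 * PI) t).
  { intros t Ht. unfold Fop, Defs.shift. destruct (Rlt_dec (0 - h) 0); [|lra].
    destruct (Rlt_dec (2 * PI - h) 0); [lra|].
    rewrite (proj1 (Uper t Ht)), Kper. replace (0 - h + 2 * PI) with (2 * PI - h) by ring. reflexivity. }
  assert (BTv : forall x0 t, 0 <= x0 <= 2 * PI -> 0 < t < T -> is_derive (fun s => v x0 s) t (vt x0 t)).
  { apply BT; auto. intros; apply D; auto. }
  assert (vtper : forall t, 0 < t < T -> vt 0 t = vt (2 * PI) t).
  { intros t Ht. apply (is_derive_uniq (fun s => v 0 s) t). apply BTv; auto; lra.
    apply is_derive_ext_loc with (fun s => v (2 * PI) s). 2: apply BTv; auto; lra.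
    apply locally_R. exists (Rmin t (T - t)). split. apply Rmin_pos; lra.
    intros s Hs. symmetry. apply Hbc. revert Hs. apply Rmin_case_strong; intros; unfold Rabs in *; destruct Rcase_abs; lra. }
  assert (vxxper : forall t, 0 < t < T -> vxx 0 t = vxx (2 * PI) t).
  { intros t Ht. pose proof (Heq 0 t ltac:(lra) ltac:(lra)). pose proof (Heq (2 * PI) t ltac:(lra) ltac:(lra)).
    rewrite <- gper in H1 by lra. rewrite vtper in H0 by auto.
    apply Rmult_eq_reg_l with alpha; lra. }
  set (V := fun x t => v (red x) t). set (VX := fun x t => vx (red x) t).
  set (VXX := fun x t => vxx (red x) t). set (VT := fun x t => vt (red x) t).
  assert (Der : forall x t, 0 < t < T -> is_derive (fun y => V y t) x (VX x t) /\
     is_derive (fun y => VX y t) x (VXX x t) /\ is_derive (fun s => V x s) t (VT x t)).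
  { intros x t Ht. unfold V, VX, VXX, VT. split; [|split].
    - apply (GD (fun y => v y t) (fun y => vx y t)).
      apply (cont2_slice T v t); auto; lra. apply (cont2_slice T vx t); auto; lra.
      intros; apply D; auto. apply Hbc; lra. apply Hbc; lra.
    - apply (GD (fun y => vx y t) (fun y => vxx y t)).
      apply (cont2_slice T vx t); auto; lra. apply (cont2_slice T vxx t); auto; lra.
      intros; apply D; auto. apply Hbc; lra. apply vxxper; auto.
    - apply BTv; auto. pose proof (red_bounds x). lra. }
  assert (Cont : contR T V) by (apply PC; auto; intros; apply Hbc; auto).
  assert (Per : forall x t, 0 <= t <= T -> V (x + 2 * PI) t = V x t).
  { intros. unfold V. rewrite red_add2PI. auto. }
  assert (EqV : forall x t, 0 < t < T -> VT x t - alpha * VXX x t = Gf x t).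
  { intros x t Ht. unfold VT, VXX, Gf. apply Heq. pose proof (red_bounds x). lra. lra. }
  assert (Init : forall x, V x 0 = phi (red x)).
  { intros x. unfold V. apply Hin. pose proof (red_bounds x). lra. }
  destruct HPhi as [P0 [P1 P2]].
  assert (Interior : forall x t, 0 < x < 2 * PI -> 0 < t < T ->
     Rabs (v x t) <= a /\ Rabs (vx x t) <= a /\ Rabs (vxx x t) <= a /\ Rabs (vt x t) <= alpha * a + p / T).
  { intros x t Hx Ht.
    assert (Rx : red x = x) by (apply red_id; lra).
    assert (Hgb : gb * T <= p) by (unfold gb; lra).
    assert (gbp : gb <= p / T).
    { apply Rmult_le_reg_r with T; auto. unfold Rdiv. rewrite Rmult_assoc, Rinv_l by lra. lra. }
    assert (B0 : Rabs (v x t) <= a).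
    { pose proof (MPcomb alpha T V VX VXX VT Gf 0 0 1 0 p gb Ha HT Hgb0 Per Der Cont EqV) as M.
      assert (Ev : Rabs (v x t) <= p + gb * T).
      { replace (v x t) with (0 * V (x + 0) t + 0 * V (x - 0) t + 1 * V x t) by (unfold V; rewrite Rx; ring).
        apply M; try lra.
        - intros y s Hs. replace (0 * Gf (y + 0) s + 0 * Gf (y - 0) s + 1 * Gf y s) with (Gf y s) by ring.
          apply (proj1 (Ga s Hs)).
        - intros y _. replace (0 * V (y + 0) 0 + 0 * V (y - 0) 0 + 1 * V y 0) with (V y 0) by ring.
          rewrite Init. apply P0. }
      lra. }
    assert (B1 : Rabs (vx x t) <= a).
    { assert (Ev : Rabs (vx x t) <= p + gb * T).
      { apply (LIM1 (fun y => V y t) x).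
        - replace (vx x t) with (VX x t) by (unfold VX; rewrite Rx; auto). apply Der; auto.
        - intros d Hd. 
          pose proof (MPcomb alpha T V VX VXX VT Gf 1 0 (-1) d (p * d) (gb * d) Ha HT ltac:(nra) Per Der Cont EqV) as M.
          replace (V (x + d) t - V x t) with (1 * V (x + d) t + 0 * V (x - d) t + -1 * V x t) by ring.
          replace ((p + gb * T) * d) with (p * d + gb * d * T) by ring.
          apply M; try lra.
          + intros y s Hs. replace (1 * Gf (y + d) s + 0 * Gf (y - d) s + -1 * Gf y s) with (Gf (y + d) s - Gf y s) by ring.
            replace (gb * d) with (gb * Rabs (y + d - y)) by (replace (y + d - y) with d by ring; rewrite Rabs_pos_eq; lra).
            apply (proj1 (proj2 (Ga s Hs))). replace (y + d - y) with d by ring. rewrite Rabs_pos_eq; lra.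
          + intros y _. replace (1 * V (y + d) 0 + 0 * V (y - d) 0 + -1 * V y 0) with (V (y + d) 0 - V y 0) by ring.
            rewrite !Init.
            replace (p * d) with (p * Rabs (y + d - y)) by (replace (y + d - y) with d by ring; rewrite Rabs_pos_eq; lra).
            apply (P1 (y + d) y). replace (y + d - y) with d by ring. rewrite Rabs_pos_eq; lra. }
      lra. }
    assert (B2 : Rabs (vxx x t) <= a).
    { assert (Ev : Rabs (vxx x t) <= 2 * p + gb * T).
      { apply (LIM2 (fun y => V y t) (fun y => VX y t) x).
        - intros y. apply Der; auto.
        - replace (vxx x t) with (VXX x t) by (unfold VXX; rewrite Rx; auto). apply Der; auto.
        - intros d Hd. 
          pose proof (MPcomb alpha T V VX VXX VT Gf 1 1 (-2) d (2 * p * d ^ 2) (gb * d ^ 2) Ha HT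
            ltac:(apply Rmult_le_pos; [lra| apply pow2_ge_0]) Per Der Cont EqV) as M.
          replace (V (x + d) t + V (x - d) t - 2 * V x t) with (1 * V (x + d) t + 1 * V (x - d) t + -2 * V x t) by ring.
          replace ((2 * p + gb * T) * d ^ 2) with (2 * p * d ^ 2 + gb * d ^ 2 * T) by ring.
          apply M; try lra.
          + intros y s Hs. replace (1 * Gf (y + d) s + 1 * Gf (y - d) s + -2 * Gf y s) with (Gf (y + d) s + Gf (y - d) s - 2 * Gf y s) by ring.
            apply (proj2 (proj2 (Ga s Hs))). lra.
          + intros y _. replace (1 * V (y + d) 0 + 1 * V (y - d) 0 + -2 * V y 0) with (V (y + d) 0 + V (y - d) 0 - 2 * V y 0) by ring.
            rewrite !Init. apply (P2 y d). lra. }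
      lra. }
    split; auto. split; auto. split; auto.
    pose proof (Heq x t ltac:(lra) ltac:(lra)) as E.
    assert (Eg : Rabs (Fop h k um x t) <= gb).
    { replace (Fop h k um x t) with (Gf x t) by (unfold Gf; rewrite Rx; auto). apply (proj1 (Ga t Ht)). }
    replace (vt x t) with (alpha * vxx x t + Fop h k um x t) by lra.
    eapply Rle_trans. apply Rabs_triang. rewrite Rabs_mult, (Rabs_pos_eq alpha) by lra.
    apply Rplus_le_compat. apply Rmult_le_compat_l; lra. lra. }
  intros x t Hx Ht. split; [|split; [|split]].
  - apply (CB T v a HT C0); auto. intros; apply Interior; auto.
  - apply (CB T vx a HT C1); auto. intros; apply Interior; auto.
  - apply (CB T vxx a HT C2); auto. intros; apply Interior; auto.
  - apply (CB T vt _ HT C3); auto. intros; apply Interior; auto.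
Qed.

Lemma cont_rect_1d T (w : R -> R -> R) (f : R -> R) a b : a <= 0 -> 2 * PI <= b -> cont_on a b f ->
  (forall x t, 0 <= x <= 2 * PI -> 0 <= t <= T -> w x t = f x) -> cont_rect T w.
Proof.
  intros Ha Hb Hc E x t Hx Ht eps He. destruct (Hc x ltac:(lra) eps He) as [d [Hd H]].
  exists d. split; auto. intros y s Hy Hs Hyx Hst. rewrite !E; auto. apply H; auto. lra.
Qed.

Theorem lemma2' :
  forall (h alpha T : R) (phi phi1 phi2 : R -> R),
    0 < h < 2 * PI -> 0 < alpha -> 0 < T ->
    C2_on (- h) (2 * PI) phi phi1 phi2 ->
    (forall x, - h <= x <= 2 * PI -> 0 <= phi x) ->
    RInt phi 0 (2 * PI) = 1 ->
    (forall x, - h <= x <= 0 -> phi x = phi (x + 2 * PI)) ->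
  exists delta : R, 0 < delta /\
  forall (k k1 k2 : R -> R),
    C2_on 0 (2 * PI) k k1 k2 ->
    (forall x, 0 <= x <= 2 * PI -> 0 < k x) ->
    k 0 = k (2 * PI) -> k1 0 = k1 (2 * PI) ->
    (forall x, 0 <= x <= 2 * PI ->
       Rmax (Rabs (k x)) (Rmax (Rabs (k1 x)) (Rabs (k2 x))) < delta) ->
  forall u : nat -> R -> R -> R,
    (forall x t, 0 <= x <= 2 * PI -> 0 <= t <= T -> u O x t = phi x) ->
    (forall m, is_lin_solution alpha T phi (Fop h k (u m)) (u (S m))) ->
  exists M : R, forall (m : nat) (wx wxx wt : R -> R -> R),
    C21 T (u m) wx wxx wt ->
    forall x t, 0 <= x <= 2 * PI -> 0 <= t <= T ->
      C21_pt (u m) wx wxx wt x t <= M.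
Proof.
  intros h alpha T phi phi1 phi2 Hh Ha HT HC2 _ _ Hper.
  pose proof PI_gt1.
  assert (HC2' : C2_on 0 (2 * PI) phi phi1 phi2) by (apply C2_on_sub with (- h) (2 * PI); auto; lra).
  assert (P0 : phi 0 = phi (2 * PI)) by (rewrite (Hper 0) by lra; f_equal; ring).
  assert (P1 : phi1 0 = phi1 (2 * PI)) by (apply (phi1_per h phi phi1 phi2); auto).
  pose proof HC2' as [_ [Cp0 [Cp1 Cp2]]].
  destruct (bound_on 0 (2 * PI) phi ltac:(lra) Cp0) as [M0 HM0].
  destruct (bound_on 0 (2 * PI) phi1 ltac:(lra) Cp1) as [M1 HM1].
  destruct (bound_on 0 (2 * PI) phi2 ltac:(lra) Cp2) as [M2 HM2].
  set (p := Rmax 1 (Rmax M0 (Rmax M1 M2))).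
  assert (Hp1 : 1 <= p) by apply Rmax_l.
  assert (Hp0 : M0 <= p) by (eapply Rle_trans; [apply Rmax_l|apply Rmax_r]).
  assert (Hp1' : M1 <= p) by (eapply Rle_trans; [|apply Rmax_r]; eapply Rle_trans; [apply Rmax_l|apply Rmax_r]).
  assert (Hp2 : M2 <= p) by (eapply Rle_trans; [|apply Rmax_r]; eapply Rle_trans; [|apply Rmax_r]; apply Rmax_r).
  destruct (S3_per phi phi1 phi2 p p p HC2' P0 P1) as [HPhi _].
  { intros x Hx. split; [|split]. eapply Rle_trans; eauto. eapply Rle_trans; eauto. eapply Rle_trans; eauto. }
  set (a := 3 * p).
  assert (Ha3 : 0 < a ^ 3) by (apply pow_lt; unfold a; lra).
  set (delta := p / (28 * a ^ 3 * T)).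
  assert (Hdel : 0 < delta) by (unfold delta; apply Rdiv_lt_0_compat; [lra|]; apply Rmult_lt_0_compat; [lra|auto]).
  exists delta. split; auto.
  intros k k1 k2 Hk _ Kp0 Kp1 Kb u Hu0 Hus.
  destruct (S3_per k k1 k2 delta delta delta Hk Kp0 Kp1) as [HK DK].
  { intros x Hx. specialize (Kb x Hx). split; [|split].
    - left. eapply Rle_lt_trans; [apply Rmax_l|apply Kb].
    - left. eapply Rle_lt_trans; [|apply Kb]. eapply Rle_trans; [apply Rmax_l|apply Rmax_r].
    - left. eapply Rle_lt_trans; [|apply Kb]. eapply Rle_trans; [apply Rmax_r|apply Rmax_r]. }
  assert (Hsmall : 28 * delta * a ^ 3 * T <= p).
  { unfold delta. right. field. assert (a <> 0) by (unfold a; lra). repeat split; auto; try lra. }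
  assert (Q : forall m, exists wx wxx wt, C21 T (u m) wx wxx wt /\
     (forall t, 0 <= t <= T -> u m 0 t = u m (2 * PI) t /\ wx 0 t = wx (2 * PI) t) /\
     (forall x t, 0 <= x <= 2 * PI -> 0 <= t <= T ->
       Rabs (u m x t) <= a /\ Rabs (wx x t) <= a /\ Rabs (wxx x t) <= a /\ Rabs (wt x t) <= alpha * a + p / T)).
  { induction m as [|m IH].
    - exists (fun x t => phi1 x), (fun x t => phi2 x), (fun x t => 0).
      pose proof HC2 as [Dp _].
      split; [|split].
      + split; [|split; [|split; [|split]]].
        * intros x t Hx Ht. split; [|split].
          -- apply is_derive_ext_loc with phi. 2: apply Dp; lra.
             apply locally_R. exists (Rmin x (2 * PI - x)). split. apply Rmin_pos; lra.
             intros y Hy. symmetry. apply Hu0; [|lra]. revert Hy. apply Rmin_case_strong; intros; unfold Rabs in *; destruct Rcase_abs; lra.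
          -- apply Dp; lra.
          -- apply is_derive_ext_loc with (fun _ => phi x).
             apply locally_R. exists (Rmin t (T - t)). split. apply Rmin_pos; lra.
             intros s Hs. symmetry. apply Hu0; [lra|]. revert Hs. apply Rmin_case_strong; intros; unfold Rabs in *; destruct Rcase_abs; lra.
             auto_derive; auto.
        * apply (cont_rect_1d T _ phi 0 (2 * PI)); auto; lra.
        * apply (cont_rect_1d T _ phi1 0 (2 * PI)); auto; lra.
        * apply (cont_rect_1d T _ phi2 0 (2 * PI)); auto; lra.
        * apply (cont_rect_1d T _ (fun _ => 0) 0 (2 * PI)); auto; try lra.
          intros x Hx eps He. exists 1. split. lra. intros. rewrite Rminus_eq_0, Rabs_R0. auto.
      + intros t Ht. rewrite !Hu0 by lra. auto.
      + intros x t Hx Ht. rewrite Hu0 by auto. unfold a. split; [|split; [|split]].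
        * specialize (HM0 x Hx). lra.
        * specialize (HM1 x Hx). lra.
        * specialize (HM2 x Hx). lra.
        * rewrite Rabs_R0. assert (0 <= p / T) by (apply Rdiv_le_0_compat; lra). nra.
    - destruct IH as [wx [wxx [wt [HC [Hpr Hb]]]]].
      apply (STEP h alpha T phi k delta p a (u m) wx wxx wt (u (S m))); auto; try (unfold a; lra).
      + intros x. exists (k1 (red x)). apply DK.
      + intros x t Hx Ht. destruct (Hb x t Hx Ht) as [B1 [B2 [B3 _]]]. auto. }
  exists (a + a + a + (alpha * a + p / T)).
  intros m wx wxx wt HC x t Hx Ht.
  destruct (Q m) as [vx [vxx [vt [HC' [_ Hb]]]]].
  destruct (UQ T (u m) wx wxx wt vx vxx vt HT HC HC' x t Hx Ht) as [E1 [E2 E3]].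
  unfold C21_pt. rewrite E1, E2, E3. destruct (Hb x t Hx Ht) as [B0 [B1 [B2 B3]]]. lra.
Qed.

Theorem lemma2 :
  forall (h alpha T : R) (phi phi1 phi2 : R -> R),
    0 < h < 2 * PI -> 0 < alpha -> 0 < T ->
    C2_on (- h) (2 * PI) phi phi1 phi2 ->
    (forall x, - h <= x <= 2 * PI -> 0 <= phi x) ->
    RInt phi 0 (2 * PI) = 1 ->
    (forall x, - h <= x <= 0 -> phi x = phi (x + 2 * PI)) ->
  exists delta : R, 0 < delta /\
  forall (k k1 k2 : R -> R),
    C2_on 0 (2 * PI) k k1 k2 ->
    (forall x, 0 <= x <= 2 * PI -> 0 < k x) ->
    k 0 = k (2 * PI) -> k1 0 = k1 (2 * PI) ->
    (* kbar = max_{[0,2pi]} max(|k|,|k'|,|k''|) < delta *)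
    (forall x, 0 <= x <= 2 * PI ->
       Rmax (Rabs (k x)) (Rmax (Rabs (k1 x)) (Rabs (k2 x))) < delta) ->
  forall u : nat -> R -> R -> R,
    (forall x t, 0 <= x <= 2 * PI -> 0 <= t <= T -> u O x t = phi x) ->
    (forall m, is_lin_solution alpha T phi (Fop h k (u m)) (u (S m))) ->
  exists M : R, forall (m : nat) (wx wxx wt : R -> R -> R),
    C21 T (u m) wx wxx wt ->
    forall x t, 0 <= x <= 2 * PI -> 0 <= t <= T ->
      C21_pt (u m) wx wxx wt x t <= M.
Proof.
  exact lemma2'.
Qed.
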